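(* Let $\mathbb{T}^2=[-\pi,\pi]^2$ and let $f_0,g_0$ be smooth $2\pi$-periodic functions of $y$. Then there exist constants $C_0,C_1,C_2>0$ and $\beta_1,\beta_2,\beta_3>0$ depending only on $f_0,g_0$, and a function $U(t,y)$, smooth in $y$, with $\|U\|_{L^\infty}\le 1$ and $\|U(t,\cdot)\|_{H^1_y}\le C_0e^{\beta_1\lceil t\rceil^2}$, such that the solution $\rho$ of \[ \partial_t\rho+U(t,y)\partial_x\rho=0,\qquad \rho(0,x,y)=f_0(y)\sin x+g_0(y)\cos x, \] satisfies $\|\rho(t,\cdot)\|_{H^{-1}}\le C_1e^{-\beta_2 t}$ and $\|\rho(t,\cdot)\|_{H^1}\le C_2e^{\beta_3\lceil t\rceil^2}$ for all $t\ge0$.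
   Context: $\lceil\cdot\rceil$ is the ceiling function. $\|f\|_{H^1}^2=\|f\|_{L^2}^2+\|\nabla f\|_{L^2}^2$ on $\mathbb{T}^2$; for mean-zero $f$, $\|f\|_{H^{-1}}^2=\sum_{\xi\in\mathbb{Z}^2\setminus\{0\}}|\xi|^{-2}|\hat f(\xi)|^2$. *)

(* Defs.v *)
From Stdlib Require Import Reals.
From Coquelicot Require Import Coquelicot.
Open Scope R_scope.

(* ceiling function: Int_part is the floor *)
Definition ceil (x : R) : Z := (- Int_part (- x))%Z.

Definition smooth1 (f : R -> R) : Prop :=
  forall (n : nat) (x : R), ex_derive (Derive_n f n) x.

Definition periodic2pi (f : R -> R) : Prop := forall y, f (y + 2 * PI) = f y.

Definition H1_norm_T (f : R -> R) : R :=
  sqrt (RInt (fun y => f y ^ 2 + Derive f y ^ 2) (- PI) PI).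

Definition H1_norm_T2 (f : R -> R -> R) : R :=
  sqrt (RInt (fun x => RInt (fun y =>
          f x y ^ 2
          + Derive (fun x' => f x' y) x ^ 2
          + Derive (fun y' => f x y') y ^ 2) (- PI) PI) (- PI) PI).

(* Fourier coefficient hat f(k,l) = (2 pi)^{-2} \int_{T^2} f(x,y) e^{-i(kx+ly)} dx dy,
   stored as (real part, minus imaginary part); we only need |hat f|^2. *)
Definition fourier_re (f : R -> R -> R) (k l : Z) : R :=
  / (2 * PI) ^ 2 * RInt (fun x => RInt (fun y =>
      f x y * cos (IZR k * x + IZR l * y)) (- PI) PI) (- PI) PI.
Definition fourier_im (f : R -> R -> R) (k l : Z) : R :=
  / (2 * PI) ^ 2 * RInt (fun x => RInt (fun y =>
      f x y * sin (IZR k * x + IZR l * y)) (- PI) PI) (- PI) PI.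
Definition fourier_abs2 (f : R -> R -> R) (k l : Z) : R :=
  fourier_re f k l ^ 2 + fourier_im f k l ^ 2.

Definition Hm1_term (f : R -> R -> R) (k l : Z) : R :=
  if andb (Z.eqb k 0) (Z.eqb l 0) then 0
  else fourier_abs2 f k l / (IZR k ^ 2 + IZR l ^ 2).

(* partial sum over the square max(|k|,|l|) <= N *)
Definition Hm1_partial (f : R -> R -> R) (N : nat) : R :=
  sum_f_R0 (fun i => sum_f_R0 (fun j =>
     Hm1_term f (Z.of_nat i - Z.of_nat N)%Z (Z.of_nat j - Z.of_nat N)%Z)
     (2 * N)) (2 * N).

(* ||f||_{H^{-1}} = sqrt( sum_{xi in Z^2 \ 0} |xi|^{-2} |hat f(xi)|^2 ) in [0, +oo]
   (nonnegative series: limit of the nondecreasing square partial sums) *)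
Definition Hm1_norm (f : R -> R -> R) : Rbar :=
  match Lim_seq (Hm1_partial f) with
  | Finite r => Finite (sqrt r)
  | p_infty => p_infty
  | m_infty => m_infty
  end.

(* rho solves  d_t rho + U(t,y) d_x rho = 0,  rho(0) = rho0, for t >= 0, in the
   sense of characteristics: rho is constant along the flow
   (x,y) -> (x + \int_0^t U(s,y) ds, y). *)
Definition transport_solution (U : R -> R -> R) (rho0 : R -> R -> R)
    (rho : R -> R -> R -> R) : Prop :=
  forall t x y, 0 <= t ->
    rho t (x + RInt (fun s => U s y) 0 t) y = rho0 x y.

(* Main.v *)
Require Import Defs.
From Stdlib Require Import Reals Lra Lia ZArith FunctionalExtensionality.
From Coquelicot Require Import Coquelicot.
Open Scope R_scope.

Lemma RInt_plus' f g a b : ex_RInt f a b -> ex_RInt g a b ->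
  RInt (fun x => f x + g x) a b = RInt f a b + RInt g a b.
Proof. intros; apply (RInt_plus f g a b); auto. Qed.
Lemma RInt_minus' f g a b : ex_RInt f a b -> ex_RInt g a b ->
  RInt (fun x => f x - g x) a b = RInt f a b - RInt g a b.
Proof. intros; apply (RInt_minus f g a b); auto. Qed.
Lemma RInt_scal' f a b c : ex_RInt f a b ->
  RInt (fun x => c * f x) a b = c * RInt f a b.
Proof. intros; apply (RInt_scal f a b c); auto. Qed.
Lemma RInt_Chasles' f a b c : ex_RInt f a b -> ex_RInt f b c ->
  RInt f a b + RInt f b c = RInt f a c.
Proof. intros; apply (RInt_Chasles f a b c); auto. Qed.

Definition cont (f : R -> R) := forall x, continuous f x.

Lemma cont_ex f a b : cont f -> ex_RInt f a b.
Proof. intros H; apply (ex_RInt_continuous (V:=R_CompleteNormedModule)); intros; apply H. Qed.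

Lemma cont_plus f g : cont f -> cont g -> cont (fun x => f x + g x).
Proof. intros Hf Hg x; apply (continuous_plus f g); auto. Qed.
Lemma cont_minus f g : cont f -> cont g -> cont (fun x => f x - g x).
Proof. intros Hf Hg x; apply (continuous_minus f g); auto. Qed.
Lemma cont_mult f g : cont f -> cont g -> cont (fun x => f x * g x).
Proof. intros Hf Hg x; apply (continuous_mult f g); auto. Qed.
Lemma cont_const c : cont (fun _ => c).
Proof. intros x; apply continuous_const. Qed.
Lemma cont_id : cont (fun x => x).
Proof. intros x; apply continuous_id. Qed.
Lemma cont_comp f g : cont f -> cont g -> cont (fun x => g (f x)).
Proof. intros Hf Hg x; apply (continuous_comp f g); auto. Qed.
Lemma cont_der f : (forall x, ex_derive f x) -> cont f.
Proof. intros H x; apply (ex_derive_continuous (K:=R_AbsRing) (V:=R_NormedModule)); auto. Qed.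
Lemma cont_cos : cont cos.
Proof. apply cont_der; intros; auto_derive; auto. Qed.
Lemma cont_sin : cont sin.
Proof. apply cont_der; intros; auto_derive; auto. Qed.
Lemma cont_lin a b : cont (fun x => a * x + b).
Proof. apply cont_der; intros; auto_derive; auto. Qed.

Lemma cos_lip p q : Rabs (cos p - cos q) <= Rabs (p - q).
Proof.
  destruct (MVT_gen cos q p (fun x => - sin x)) as [c [_ Hc]].
  - intros; auto_derive; auto; ring.
  - intros; apply continuity_cos.
  - rewrite Hc, Rabs_mult. rewrite <- (Rmult_1_l (Rabs (p - q))) at 2.
    apply Rmult_le_compat_r; [apply Rabs_pos|]. rewrite Rabs_Ropp.
    apply Rabs_le; pose proof (SIN_bound c); lra.
Qed.
Lemma sin_lip p q : Rabs (sin p - sin q) <= Rabs (p - q).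
Proof.
  destruct (MVT_gen sin q p (fun x => cos x)) as [c [_ Hc]].
  - intros; auto_derive; auto; ring.
  - intros; apply continuity_sin.
  - rewrite Hc, Rabs_mult. rewrite <- (Rmult_1_l (Rabs (p - q))) at 2.
    apply Rmult_le_compat_r; [apply Rabs_pos|].
    apply Rabs_le; pose proof (COS_bound c); lra.
Qed.

Lemma RInt_lin (g : R -> R) u v a b : u <> 0 -> cont g ->
  RInt (fun y => g (u * y + v)) a b = / u * RInt g (u * a + v) (u * b + v).
Proof.
  intros Hu Hg.
  rewrite <- (RInt_comp_lin g u v a b) by (apply cont_ex; auto).
  rewrite (RInt_ext (fun y => scal u (g (u * y + v))) (fun y => u * g (u * y + v))) by reflexivity.
  rewrite (RInt_scal' (fun y => g (u * y + v))).
  - generalize (RInt (fun y => g (u * y + v)) a b); intros r; simpl in r |- *; field; auto.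
  - apply cont_ex. apply (cont_comp (fun y => u * y + v) g); auto using cont_lin.
Qed.

Lemma RInt_shift (g : R -> R) s a b : cont g ->
  RInt (fun y => g (y + s)) a b = RInt g (a + s) (b + s).
Proof.
  intros Hg. 
  rewrite (RInt_ext _ (fun y => g (1 * y + s))) by (intros; f_equal; ring).
  rewrite RInt_lin by (auto; lra). rewrite !Rmult_1_l, Rinv_1, Rmult_1_l; reflexivity.
Qed.

Lemma RInt_period (g : R -> R) c : cont g -> (forall x, g (x + 2 * PI) = g x) ->
  RInt g c (c + 2 * PI) = RInt g (- PI) PI.
Proof.
  intros Hg Hp.
  rewrite <- (RInt_Chasles' g c (-PI) (c + 2 * PI)) by (apply cont_ex; auto).
  rewrite <- (RInt_Chasles' g (-PI) PI (c + 2 * PI)) by (apply cont_ex; auto).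
  assert (E : RInt g PI (c + 2 * PI) = RInt g (-PI) c).
  { rewrite <- (RInt_ext (fun y => g (y + 2 * PI)) g (-PI) c) by (intros; apply Hp).
    rewrite RInt_shift; auto. replace (- PI + 2 * PI) with PI by ring; reflexivity. }
  rewrite E.
  assert (E2 : RInt g c (- PI) + RInt g (- PI) c = 0).
  { rewrite RInt_Chasles' by (apply cont_ex; auto). exact (RInt_point (V:=R_CompleteNormedModule) c g). }
  lra.
Qed.

Lemma RInt_cell (g : R -> R) (n : nat) a : (n >= 1)%nat -> cont g ->
  (forall x, g (x + 2*PI) = g x) ->
  RInt (fun y => g (INR n * y)) a (a + 2*PI / INR n) = / INR n * RInt g (-PI) PI.
Proof.
  intros Hn Hg Hp. assert (HN: 0 < INR n) by (apply lt_0_INR; lia).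
  rewrite (RInt_ext _ (fun y => g (INR n * y + 0))) by (intros; f_equal; ring).
  rewrite RInt_lin by (auto; lra).
  replace (INR n * (a + 2*PI/INR n) + 0) with (INR n * a + 0 + 2*PI) by (field; lra).
  rewrite RInt_period; auto.
Qed.

Lemma RInt_const' a b c : RInt (fun _ => c) a b = (b - a) * c.
Proof. rewrite RInt_const. reflexivity. Qed.

Lemma BL (w g : R -> R) (K : R) (n : nat) :
  (n >= 1)%nat -> 0 <= K -> cont w -> cont g ->
  (forall x, g (x + 2*PI) = g x) -> (forall x, Rabs (g x) <= 1) ->
  (forall y z, -PI <= y <= PI -> -PI <= z <= PI -> Rabs (w y - w z) <= K * Rabs (y - z)) ->
  Rabs (RInt (fun y => w y * g (INR n * y)) (-PI) PI
        - RInt g (-PI) PI / (2*PI) * RInt w (-PI) PI) <= 8 * PI^2 * K / INR n.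
Proof.
  intros Hn HK Hw Hg Hp Hb HL.
  set (N := INR n). assert (HN : 0 < N) by (apply lt_0_INR; lia).
  pose proof PI_RGT_0 as HPI.
  set (h := 2*PI/N). assert (Hh : 0 < h) by (unfold h; apply Rdiv_lt_0_compat; lra).
  set (c := RInt g (-PI) PI / (2*PI)).
  assert (Hc : Rabs c <= 1).
  { unfold c.
    assert (Rabs (RInt g (-PI) PI) <= (PI - - PI) * 1)
      by (apply abs_RInt_le_const; [lra| apply cont_ex; auto | intros; apply Hb]).
    unfold Rdiv; rewrite Rabs_mult, Rabs_inv, (Rabs_right (2*PI)) by lra.
    apply (Rmult_le_reg_r (2*PI)); [lra|]. rewrite Rmult_assoc, Rinv_l by lra. lra. }
  assert (HgN : cont (fun y => g (N * y))).
  { apply (cont_comp (fun y => N * y) g); auto.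
    intro x; apply cont_der; intros; auto_derive; auto. }
  set (F := fun y => w y * g (N * y) - c * w y).
  assert (HF : cont F).
  { unfold F. apply cont_minus. apply cont_mult; auto. apply cont_mult; auto using cont_const. }
  assert (Hm : forall m, (m <= n)%nat ->
     Rabs (RInt F (-PI) (-PI + INR m * h)) <= INR m * (2 * K * h^2)).
  { induction m; intros Hmn.
    - simpl. rewrite Rmult_0_l, Rplus_0_r.
      rewrite (RInt_point (V:=R_CompleteNormedModule)). simpl. unfold zero; simpl. rewrite Rabs_R0; lra.
    - assert (Hmn' : (m <= n)%nat) by lia. specialize (IHm Hmn').
      replace (-PI + INR (S m) * h) with ((-PI + INR m*h) + h) by (rewrite S_INR; ring).
      rewrite <- (RInt_Chasles' F (-PI) (-PI + INR m * h)) by (apply cont_ex; auto).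
      set (am := -PI + INR m*h) in *.
      assert (Ham: -PI <= am /\ am + h <= PI).
      { unfold am. pose proof (pos_INR m).
        assert (INR (S m) <= N) by (apply le_INR; lia). rewrite S_INR in H0.
        split. nra. replace (-PI + INR m * h + h) with (-PI + (INR m + 1) * h) by ring.
        unfold h. assert ((INR m + 1) * (2 * PI / N) <= 2 * PI).
        { unfold Rdiv. rewrite <- Rmult_assoc, (Rmult_comm (INR m + 1)), Rmult_assoc.
          rewrite <- (Rmult_1_r (2*PI)) at 2. apply Rmult_le_compat_l; [lra|].
          apply (Rmult_le_reg_r N); auto. rewrite Rmult_assoc, Rinv_l by lra. lra. }
        lra. }
      set (D := fun y => (w y - w am) * (g (N*y) - c)).
      assert (HD : cont D).
      { unfold D. apply cont_mult; apply cont_minus; auto using cont_const. }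
      assert (Ecell : RInt F am (am+h) = RInt D am (am+h)).
      { rewrite (RInt_ext F (fun y => D y + w am * (g (N*y) - c))) by (intros x _; unfold F, D; simpl; ring).
        rewrite RInt_plus'; [| apply cont_ex; auto |].
        2:{ apply cont_ex. apply cont_mult; auto using cont_const. apply cont_minus; auto using cont_const. }
        rewrite RInt_scal' by (apply cont_ex; apply cont_minus; auto using cont_const).
        rewrite RInt_minus' by (apply cont_ex; auto using cont_const).
        unfold h at 2. unfold N. rewrite RInt_cell; auto. rewrite RInt_const'.
        fold N. replace (/ N * RInt g (- PI) PI - (am + h - am) * c) with 0 by (unfold c, h; field; lra). simpl; ring. }
      rewrite Ecell.
      assert (Rabs (RInt D am (am + h)) <= (am + h - am) * (K * h * 2)).
      { apply abs_RInt_le_const; [lra| apply cont_ex; auto|].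
        intros t Ht. unfold D. rewrite Rabs_mult.
        apply Rmult_le_compat; try apply Rabs_pos.
        - eapply Rle_trans. apply HL; lra. apply Rmult_le_compat_l; auto.
          rewrite Rabs_right; lra.
        - eapply Rle_trans. apply Rabs_triang. rewrite Rabs_Ropp.
          specialize (Hb (N*t)). lra. }
      eapply Rle_trans. apply Rabs_triang. rewrite S_INR. 
      replace (am + h - am) with h in H by ring. nra. }
  specialize (Hm n (le_n n)). fold N in Hm.
  replace (-PI + N * h) with PI in Hm by (unfold h; field; lra).
  unfold F in Hm. rewrite RInt_minus' in Hm.
  2: apply cont_ex; apply cont_mult; auto.
  2: apply cont_ex; apply cont_mult; auto using cont_const.
  rewrite RInt_scal' in Hm by (apply cont_ex; auto).
  fold c. eapply Rle_trans. apply Hm.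
  unfold h. right. field. lra.
Qed.

Lemma PI_gt3 : 3 < PI.
Proof. pose proof PI2_3_2; lra. Qed.

Lemma sin_lb_lin v : 0 <= v <= 1 -> 5/6 * v <= sin v.
Proof.
  intros Hv. pose proof PI_gt3 as HP3.
  destruct (sin_bound v 0) as [H _]; try lra.
  unfold sin_approx, sin_term in H. simpl in H.
  assert (v^3 <= v) by (simpl; nra).
  simpl in H. unfold Rdiv in H. rewrite Rinv_1 in H.
  replace (1 + 1 + 1 + 1 + 1 + 1)%R with 6 in H by ring. nra.
Qed.

Lemma Rabs_sq x : Rabs x ^ 2 = x ^ 2.
Proof. unfold Rabs; destruct (Rcase_abs x); ring. Qed.

Lemma cos_ub_quad u : Rabs u <= PI/2 -> cos u <= 1 - 2 * u^2 / PI^2.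
Proof.
  intros Hu. pose proof PI_gt3. pose proof PI_4.
  replace u with (2 * (u/2)) at 1 by field. rewrite cos_2a_sin.
  assert (Hs : 2 / PI * Rabs (u/2) <= Rabs (sin (u/2))).
  { destruct (Rle_dec 0 u).
    - rewrite !Rabs_right; try lra.
      + pose proof (sin_lb_lin (u/2)). assert (2/PI <= 5/6).
        { apply (Rmult_le_reg_r PI); [lra|]. unfold Rdiv; rewrite Rmult_assoc, Rinv_l; lra. }
        rewrite Rabs_right in Hu by lra. assert (u/2 <= 1) by lra. nra.
      + apply Rle_ge, sin_ge_0; rewrite Rabs_right in Hu; lra.
    - rewrite (Rabs_left (u/2)) by lra. rewrite Rabs_left1.
      + rewrite <- sin_neg. pose proof (sin_lb_lin (-(u/2))). assert (2/PI <= 5/6).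
        { apply (Rmult_le_reg_r PI); [lra|]. unfold Rdiv; rewrite Rmult_assoc, Rinv_l; lra. }
        rewrite Rabs_left in Hu by lra. assert (-(u/2) <= 1) by lra. nra.
      + rewrite <- (Ropp_involutive (sin (u/2))), <- sin_neg. 
        assert (0 <= sin (- (u/2))). apply sin_ge_0; rewrite Rabs_left in Hu; lra. lra. }
  assert (Hsq : (2/PI * Rabs (u/2))^2 <= (sin (u/2))^2).
  { rewrite <- (Rabs_sq (sin (u/2))). apply pow_incr. split; [|lra].
    apply Rmult_le_pos; [apply Rlt_le, Rdiv_lt_0_compat; lra | apply Rabs_pos]. }
  replace ((2/PI * Rabs (u/2))^2) with (u^2/PI^2) in Hsq.
  2:{ rewrite Rpow_mult_distr, Rabs_sq. field. lra. }
  replace (2 * u^2/PI^2) with (2*(u^2/PI^2)) by (field; lra).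
  assert (sin(u/2)^2 = sin(u/2)*sin(u/2)) by ring. lra.
Qed.

Definition Jc (b : R) := RInt (fun s => cos (b * cos s)) (-PI) PI / (2*PI).

Lemma cont_cosb b : cont (fun s => cos (b * cos s)).
Proof. apply cont_der; intros; auto_derive; auto. Qed.
Lemma cont_sinb b : cont (fun s => sin (b * cos s)).
Proof. apply cont_der; intros; auto_derive; auto. Qed.

Lemma Js0 b : RInt (fun s => sin (b * cos s)) (-PI) PI = 0.
Proof.
  rewrite <- (RInt_Chasles' _ (-PI) 0 PI) by (apply cont_ex, cont_sinb).
  assert (E : RInt (fun s => sin (b * cos s)) 0 PI = - RInt (fun s => sin (b * cos s)) (-PI) 0).
  { assert (Es := RInt_shift (fun s => sin (b * cos s)) PI (-PI) 0 (cont_sinb b)).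
    replace (-PI + PI) with 0 in Es by ring. rewrite Rplus_0_l in Es. rewrite <- Es.
    rewrite (RInt_ext _ (fun s => -1 * sin (b * cos s))).
    - rewrite RInt_scal' by (apply cont_ex, cont_sinb). simpl; ring.
    - intros. rewrite neg_cos. replace (b * - cos x) with (- (b * cos x)) by ring.
      rewrite sin_neg; simpl; ring. }
  rewrite E; simpl; ring.
Qed.

Lemma RInt_cos2 : RInt (fun s => cos s ^ 2) (-PI) PI = PI.
Proof.
  assert (H : is_RInt (fun s => cos s ^ 2) (-PI) PI
     (minus ((fun s => s/2 + sin (2*s)/4) PI) ((fun s => s/2 + sin (2*s)/4) (-PI)))).
  { apply (is_RInt_derive (V:=R_CompleteNormedModule) (fun s => s/2 + sin (2*s)/4)).
    + intros; auto_derive; auto. rewrite cos_2a_cos. field.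
    + intros. apply cont_der; intros; auto_derive; auto. }
  rewrite (is_RInt_unique _ _ _ _ H). unfold minus, plus, opp; simpl.
  replace (2 * -PI) with (-(2*PI)) by ring. rewrite sin_neg, sin_2PI. field.
Qed.

Lemma Jc_abs b : Rabs (Jc b) <= 1.
Proof.
  pose proof PI_RGT_0. unfold Jc.
  assert (Rabs (RInt (fun s => cos (b * cos s)) (-PI) PI) <= (PI - - PI) * 1)
    by (apply abs_RInt_le_const; [lra| apply cont_ex, cont_cosb | intros; apply Rabs_le, COS_bound]).
  unfold Rdiv; rewrite Rabs_mult, Rabs_inv, (Rabs_right (2*PI)) by lra.
  apply (Rmult_le_reg_r (2*PI)); [lra|]. rewrite Rmult_assoc, Rinv_l by lra. lra.
Qed.

Lemma Jc_half : Rabs (Jc (-(PI/2))) <= 3/4.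
Proof.
  pose proof PI_RGT_0. unfold Jc.
  assert (H0 : 0 <= RInt (fun s => cos (-(PI/2) * cos s)) (-PI) PI).
  { replace 0 with (RInt (fun _ => 0) (-PI) PI) at 1 by (rewrite RInt_const'; simpl; ring).
    apply RInt_le; [lra| apply cont_ex, cont_const | apply cont_ex, cont_cosb|].
    intros x _. apply cos_ge_0; pose proof (COS_bound x); nra. }
  assert (H1 : RInt (fun s => cos (-(PI/2) * cos s)) (-PI) PI <= RInt (fun s => 1 - cos s ^2 / 2) (-PI) PI).
  { apply RInt_le; [lra| apply cont_ex, cont_cosb |
      apply cont_ex; apply cont_minus; [apply cont_const|]; apply cont_der; intros; auto_derive; auto|].
    intros x _. eapply Rle_trans. apply cos_ub_quad.
    - rewrite Rabs_mult. pose proof (COS_bound x). 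
      rewrite Rabs_Ropp, Rabs_right by lra. assert (Rabs (cos x) <= 1) by (apply Rabs_le; lra). nra.
    - right. field. lra. }
  rewrite RInt_minus' in H1 by (apply cont_ex; first [apply cont_const| apply cont_der; intros; auto_derive; auto]).
  rewrite RInt_const' in H1.
  rewrite (RInt_ext (fun s => cos s ^ 2 / 2) (fun s => /2 * cos s ^ 2)) in H1 by (intros; simpl; field).
  rewrite RInt_scal', RInt_cos2 in H1 by (apply cont_ex, cont_der; intros; auto_derive; auto).
  rewrite Rabs_right.
  - apply (Rmult_le_reg_r (2*PI)); [lra|]. unfold Rdiv. rewrite Rmult_assoc, Rinv_l by lra. lra.
  - apply Rle_ge. apply Rmult_le_pos; auto. apply Rlt_le, Rinv_0_lt_compat; lra.
Qed.

Lemma sqrt_ge_abs x y : Rabs x <= sqrt (x^2 + y^2).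
Proof.
  rewrite <- (sqrt_pow2 (Rabs x)) by apply Rabs_pos. apply sqrt_le_1_alt.
  rewrite Rabs_sq. nra.
Qed.

Lemma norm2_tri x y e1 e2 :
  sqrt ((x + e1)^2 + (y + e2)^2) <= sqrt (x^2 + y^2) + Rabs e1 + Rabs e2.
Proof.
  set (S := sqrt (x^2+y^2)). assert (HS : 0 <= S) by apply sqrt_pos.
  assert (Hx : Rabs x <= S) by apply sqrt_ge_abs.
  assert (Hy : Rabs y <= S) by (unfold S; rewrite Rplus_comm; apply sqrt_ge_abs).
  assert (HS2 : S * S = x^2 + y^2) by (apply sqrt_sqrt; nra).
  assert (0 <= S + Rabs e1 + Rabs e2) by (pose proof (Rabs_pos e1); pose proof (Rabs_pos e2); lra).
  rewrite <- (sqrt_pow2 (S + Rabs e1 + Rabs e2)) by auto.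
  apply sqrt_le_1_alt.
  assert (x * e1 <= S * Rabs e1).
  { eapply Rle_trans. apply Rle_abs. rewrite Rabs_mult. apply Rmult_le_compat_r; auto using Rabs_pos. }
  assert (y * e2 <= S * Rabs e2).
  { eapply Rle_trans. apply Rle_abs. rewrite Rabs_mult. apply Rmult_le_compat_r; auto using Rabs_pos. }
  assert (e1^2 = Rabs e1 ^2) by (rewrite Rabs_sq; auto).
  assert (e2^2 = Rabs e2 ^2) by (rewrite Rabs_sq; auto).
  pose proof (Rabs_pos e1); pose proof (Rabs_pos e2). nra.
Qed.

Lemma norm2_scal J p q : sqrt ((J*p)^2 + (J*q)^2) = Rabs J * sqrt (p^2+q^2).
Proof.
  replace ((J*p)^2 + (J*q)^2) with (Rabs J ^2 * (p^2+q^2)) by (rewrite Rabs_sq; ring).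
  rewrite sqrt_mult by (try apply pow2_ge_0; nra).
  rewrite sqrt_pow2 by apply Rabs_pos. auto.
Qed.

Lemma norm2_rot c p q : (cos c * p - sin c * q)^2 + (sin c * p + cos c * q)^2 = p^2 + q^2.
Proof. pose proof (sin2_cos2 c). unfold Rsqr in H. nra. Qed.

Definition LipOn (f : R -> R) (K : R) := forall y z, -PI <= y <= PI -> -PI <= z <= PI ->
  Rabs (f y - f z) <= K * Rabs (y - z).
Definition BndOn (f : R -> R) (M : R) := forall y, -PI <= y <= PI -> Rabs (f y) <= M.

Definition Ic (a psi : R -> R) := RInt (fun y => a y * cos (psi y)) (-PI) PI.
Definition Is (a psi : R -> R) := RInt (fun y => a y * sin (psi y)) (-PI) PI.
Definition Zn (a psi : R -> R) := sqrt (Ic a psi ^ 2 + Is a psi ^ 2).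

Lemma Lip_acos a psi Ka Ma L : 0 <= Ma -> LipOn a Ka -> LipOn psi L -> BndOn a Ma ->
  LipOn (fun y => a y * cos (psi y)) (Ka + Ma * L) /\ LipOn (fun y => a y * sin (psi y)) (Ka + Ma * L).
Proof.
  intros HM Ha Hp Hb. split; intros y z Hy Hz.
  - replace (a y * cos (psi y) - a z * cos (psi z)) with
      ((a y - a z) * cos (psi y) + a z * (cos (psi y) - cos (psi z))) by ring.
    eapply Rle_trans. apply Rabs_triang. rewrite !Rabs_mult.
    assert (Rabs (cos (psi y)) <= 1) by (apply Rabs_le, COS_bound).
    assert (Rabs (cos (psi y) - cos (psi z)) <= L * Rabs (y - z)) by (eapply Rle_trans; [apply cos_lip| apply Hp; auto]).
    specialize (Ha y z Hy Hz). specialize (Hb z Hz).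
    pose proof (Rabs_pos (a y - a z)). pose proof (Rabs_pos (a z)). pose proof (Rabs_pos (y - z)).
    pose proof (Rabs_pos (cos (psi y) - cos (psi z))). pose proof (Rabs_pos (cos (psi y))). nra.
  - replace (a y * sin (psi y) - a z * sin (psi z)) with
      ((a y - a z) * sin (psi y) + a z * (sin (psi y) - sin (psi z))) by ring.
    eapply Rle_trans. apply Rabs_triang. rewrite !Rabs_mult.
    assert (Rabs (sin (psi y)) <= 1) by (apply Rabs_le, SIN_bound).
    assert (Rabs (sin (psi y) - sin (psi z)) <= L * Rabs (y - z)) by (eapply Rle_trans; [apply sin_lip| apply Hp; auto]).
    specialize (Ha y z Hy Hz). specialize (Hb z Hz).
    pose proof (Rabs_pos (a y - a z)). pose proof (Rabs_pos (a z)). pose proof (Rabs_pos (y - z)).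
    pose proof (Rabs_pos (sin (psi y) - sin (psi z))). pose proof (Rabs_pos (sin (psi y))). nra.
Qed.

Lemma per_cosb b x : cos (b * cos (x + 2*PI)) = cos (b * cos x).
Proof. replace (x + 2*PI) with (x + 2 * INR 1 * PI) by (simpl; ring). rewrite cos_period; auto. Qed.
Lemma per_sinb b x : sin (b * cos (x + 2*PI)) = sin (b * cos x).
Proof. replace (x + 2*PI) with (x + 2 * INR 1 * PI) by (simpl; ring). rewrite cos_period; auto. Qed.

Lemma peel a psi Ka Ma L (n : nat) b c :
  (n >= 1)%nat -> cont a -> cont psi -> 0 <= Ka -> 0 <= Ma -> 0 <= L ->
  LipOn a Ka -> LipOn psi L -> BndOn a Ma ->
  Zn a (fun y => psi y + c + b * cos (INR n * y)) <=
    Rabs (Jc b) * Zn a psi + 2 * (16 * PI^2 * (Ka + Ma * L) / INR n).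
Proof.
  intros Hn Ha Hp HKa HMa HL La Lp Ba.
  set (K := Ka + Ma * L). assert (HK: 0 <= K) by (unfold K; nra).
  set (u := fun y => a y * cos (psi y + c)).
  set (v := fun y => a y * sin (psi y + c)).
  assert (Lpc : LipOn (fun y => psi y + c) L).
  { intros y z Hy Hz; replace (psi y + c - (psi z + c)) with (psi y - psi z) by ring; auto. }
  destruct (Lip_acos a (fun y => psi y + c) Ka Ma L HMa La Lpc Ba) as [Lu Lv].
  fold K in Lu, Lv.
  assert (Hpc : cont (fun y => psi y + c)) by (apply cont_plus; auto using cont_const).
  assert (Hu : cont u) by (apply cont_mult; auto; apply (cont_comp _ cos); auto using cont_cos).
  assert (Hv : cont v) by (apply cont_mult; auto; apply (cont_comp _ sin); auto using cont_sin).
  assert (BgC : forall x, Rabs (cos (b * cos x)) <= 1) by (intros; apply Rabs_le, COS_bound).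
  assert (BgS : forall x, Rabs (sin (b * cos x)) <= 1) by (intros; apply Rabs_le, SIN_bound).
  pose proof (BL u _ K n Hn HK Hu (cont_cosb b) (per_cosb b) BgC Lu) as B1.
  pose proof (BL v _ K n Hn HK Hv (cont_sinb b) (per_sinb b) BgS Lv) as B2.
  pose proof (BL u _ K n Hn HK Hu (cont_sinb b) (per_sinb b) BgS Lu) as B3.
  pose proof (BL v _ K n Hn HK Hv (cont_cosb b) (per_cosb b) BgC Lv) as B4.
  rewrite Js0 in B2, B3. fold (Jc b) in B1, B4.
  set (N := INR n) in *.
  assert (HgCN : cont (fun y => cos (b * cos (N * y)))).
  { apply (cont_comp (fun y => N * y) (fun s => cos (b * cos s))); auto using cont_cosb.
    intro x; apply cont_der; intros; auto_derive; auto. }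
  assert (HgSN : cont (fun y => sin (b * cos (N * y)))).
  { apply (cont_comp (fun y => N * y) (fun s => sin (b * cos s))); auto using cont_sinb.
    intro x; apply cont_der; intros; auto_derive; auto. }
  assert (Hacos : cont (fun y => a y * cos (psi y))) by (apply cont_mult; auto; apply (cont_comp _ cos); auto using cont_cos).
  assert (Hasin : cont (fun y => a y * sin (psi y))) by (apply cont_mult; auto; apply (cont_comp _ sin); auto using cont_sin).
  assert (EIc : Ic a (fun y => psi y + c + b * cos (N * y)) =
     RInt (fun y => u y * cos (b * cos (N * y))) (-PI) PI - RInt (fun y => v y * sin (b * cos (N * y))) (-PI) PI).
  { unfold Ic. rewrite <- RInt_minus' by (apply cont_ex, cont_mult; auto).
    apply RInt_ext; intros; unfold u, v. rewrite cos_plus. simpl; ring. }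
  assert (EIs : Is a (fun y => psi y + c + b * cos (N * y)) =
     RInt (fun y => u y * sin (b * cos (N * y))) (-PI) PI + RInt (fun y => v y * cos (b * cos (N * y))) (-PI) PI).
  { unfold Is. rewrite <- RInt_plus' by (apply cont_ex, cont_mult; auto).
    apply RInt_ext; intros; unfold u, v. rewrite sin_plus. simpl; ring. }
  assert (Eu : RInt u (-PI) PI = cos c * Ic a psi - sin c * Is a psi).
  { unfold Ic, Is. rewrite <- (RInt_scal' (fun y => a y * cos (psi y))) by (apply cont_ex; auto).
    rewrite <- (RInt_scal' (fun y => a y * sin (psi y))) by (apply cont_ex; auto).
    rewrite <- RInt_minus' by (apply cont_ex; apply cont_mult; auto using cont_const).
    apply RInt_ext; intros; unfold u. rewrite cos_plus. simpl; ring. }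
  assert (Ev : RInt v (-PI) PI = sin c * Ic a psi + cos c * Is a psi).
  { unfold Ic, Is. rewrite <- (RInt_scal' (fun y => a y * cos (psi y))) by (apply cont_ex; auto).
    rewrite <- (RInt_scal' (fun y => a y * sin (psi y))) by (apply cont_ex; auto).
    rewrite <- RInt_plus' by (apply cont_ex; apply cont_mult; auto using cont_const).
    apply RInt_ext; intros; unfold v. rewrite sin_plus. simpl; ring. }
  unfold Zn at 1. rewrite EIc, EIs.
  set (J := Jc b) in *.
  set (X1 := RInt (fun y => u y * cos (b * cos (N * y))) (-PI) PI) in *.
  set (X2 := RInt (fun y => v y * sin (b * cos (N * y))) (-PI) PI) in *.
  set (X3 := RInt (fun y => u y * sin (b * cos (N * y))) (-PI) PI) in *.
  set (X4 := RInt (fun y => v y * cos (b * cos (N * y))) (-PI) PI) in *.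
  set (Ru := RInt u (-PI) PI) in *. set (Rv := RInt v (-PI) PI) in *.
  replace (X1 - X2) with (J * Ru + ((X1 - J * Ru) - X2)) by ring.
  replace (X3 + X4) with (J * Rv + (X3 + (X4 - J * Rv))) by ring.
  eapply Rle_trans. apply norm2_tri. rewrite norm2_scal.
  replace (Ru^2 + Rv^2) with (Ic a psi ^2 + Is a psi ^2) by (rewrite Eu, Ev, norm2_rot; auto).
  fold (Zn a psi).
  assert (HN : 0 < N) by (apply lt_0_INR; lia). pose proof PI_RGT_0.
  replace (8 * PI^2 * K / N) with (16 * PI^2 * K / N / 2) in B1, B2, B3, B4 by (field; lra).
  replace (0 / (2 * PI)) with 0 in B2, B3 by (field; lra). rewrite Rmult_0_l, Rminus_0_r in B2, B3.
  pose proof (Rabs_triang (X1 - J * Ru) (- X2)) as T1. pose proof (Rabs_triang X3 (X4 - J * Rv)) as T2.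
  rewrite Rabs_Ropp in T1. 
  assert (Rabs (X1 - J * Ru - X2) <= 16 * PI ^ 2 * K / N) by (unfold Rminus at 1; lra).
  assert (Rabs (X3 + (X4 - J * Rv)) <= 16 * PI ^ 2 * K / N) by lra.
  lra.
Qed.

Fixpoint Nseq (j : nat) : nat := match j with O => 1%nat | S i => (2 * 16 ^ (S i) * Nseq i)%nat end.
Fixpoint Ssum (j : nat) : nat := match j with O => 0%nat | S i => (Ssum i + Nseq i)%nat end.

Lemma Nseq_ge1 j : (Nseq j >= 1)%nat.
Proof. induction j; simpl; [lia|]. assert (16 ^ j <> 0)%nat by (apply Nat.pow_nonzero; lia). nia. Qed.

Lemma Nseq_S j : INR (Nseq (S j)) = 2 * 16^(S j) * INR (Nseq j).
Proof.
  change (Nseq (S j)) with (2 * 16^(S j) * Nseq j)%nat. rewrite !mult_INR, pow_INR.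
  replace (INR 2) with 2 by (simpl; ring). replace (INR 16) with 16 by (simpl; ring). auto.
Qed.

Lemma Nseq_big j : 16 ^ j * (1 + INR (Ssum j)) <= INR (Nseq j).
Proof.
  induction j.
  - simpl. lra.
  - rewrite Nseq_S. change (Ssum (S j)) with (Ssum j + Nseq j)%nat. rewrite plus_INR.
    pose proof (pos_INR (Ssum j)). assert (0 < 16 ^ j) by (apply pow_lt; lra).
    assert (1 + INR (Ssum j) <= INR (Nseq j)).
    { apply Rle_trans with (16^j * (1 + INR (Ssum j))); auto.
      rewrite <- (Rmult_1_l (1 + INR (Ssum j))) at 1. apply Rmult_le_compat_r; [lra|].
      apply pow_R1_Rle; lra. }
    simpl pow. nra.
Qed.

Definition bdig (j : nat) (y : R) := (1 - cos (INR (Nseq j) * y)) / 2.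
Fixpoint psum (j : nat) (y : R) : R := match j with O => 0 | S i => psum i y + PI * bdig i y end.
Definition Phi (n : nat) (tau y : R) := psum n y + tau * bdig n y.

Lemma cont_bdig j : cont (bdig j).
Proof. apply cont_der; intros; unfold bdig; auto_derive; auto. Qed.
Lemma cont_psum j : cont (psum j).
Proof. induction j; simpl. apply cont_const. apply cont_plus; auto. apply cont_mult. apply cont_const. apply cont_bdig. Qed.

Lemma Lip_bdig j : LipOn (bdig j) (INR (Nseq j) / 2).
Proof.
  intros y z _ _. unfold bdig.
  replace ((1 - cos (INR (Nseq j) * y)) / 2 - (1 - cos (INR (Nseq j) * z)) / 2) with
    (- (cos (INR (Nseq j) * y) - cos (INR (Nseq j) * z)) / 2) by field.
  unfold Rdiv. rewrite Rabs_mult, Rabs_Ropp, Rabs_inv, (Rabs_right 2) by lra.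
  eapply Rle_trans. apply Rmult_le_compat_r. lra. apply cos_lip.
  rewrite <- Rmult_minus_distr_l, Rabs_mult, Rabs_right by (apply Rle_ge, pos_INR). lra.
Qed.

Lemma Lip_psum j : LipOn (psum j) (PI / 2 * INR (Ssum j)).
Proof.
  induction j; intros y z Hy Hz; simpl.
  - rewrite Rminus_0_r, Rabs_R0. lra.
  - rewrite plus_INR. 
    replace (psum j y + PI * bdig j y - (psum j z + PI * bdig j z)) with
      ((psum j y - psum j z) + PI * (bdig j y - bdig j z)) by ring.
    eapply Rle_trans. apply Rabs_triang. rewrite Rabs_mult, (Rabs_right PI) by (pose proof PI_RGT_0; lra).
    pose proof (IHj y z Hy Hz). pose proof (Lip_bdig j y z Hy Hz). pose proof PI_RGT_0. nra.
Qed.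

Lemma Zn_ext a p1 p2 : (forall y, p1 y = p2 y) -> Zn a p1 = Zn a p2.
Proof.
  intros H. unfold Zn, Ic, Is.
  rewrite (RInt_ext (fun y => a y * cos (p1 y)) (fun y => a y * cos (p2 y))) by (intros; rewrite H; auto).
  rewrite (RInt_ext (fun y => a y * sin (p1 y)) (fun y => a y * sin (p2 y))) by (intros; rewrite H; auto).
  auto.
Qed.

Lemma Zn_triv a Ma psi : cont a -> cont psi -> BndOn a Ma -> Zn a psi <= 4 * PI * Ma.
Proof.
  intros Ha Hp Hb. pose proof PI_RGT_0.
  assert (H1 : Rabs (Ic a psi) <= (PI - - PI) * Ma).
  { apply abs_RInt_le_const; [lra| apply cont_ex, cont_mult; auto; apply (cont_comp _ cos); auto using cont_cos|].
    intros t Ht. rewrite Rabs_mult. specialize (Hb t Ht). pose proof (Rabs_pos (a t)).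
    assert (Rabs (cos (psi t)) <= 1) by (apply Rabs_le, COS_bound). pose proof (Rabs_pos (cos (psi t))). nra. }
  assert (H2 : Rabs (Is a psi) <= (PI - - PI) * Ma).
  { apply abs_RInt_le_const; [lra| apply cont_ex, cont_mult; auto; apply (cont_comp _ sin); auto using cont_sin|].
    intros t Ht. rewrite Rabs_mult. specialize (Hb t Ht). pose proof (Rabs_pos (a t)).
    assert (Rabs (sin (psi t)) <= 1) by (apply Rabs_le, SIN_bound). pose proof (Rabs_pos (sin (psi t))). nra. }
  unfold Zn. apply Rle_trans with (Rabs (Ic a psi) + Rabs (Is a psi)); [|lra].
  rewrite <- (sqrt_pow2 (Rabs (Ic a psi) + Rabs (Is a psi))) by (pose proof (Rabs_pos (Ic a psi)); pose proof (Rabs_pos (Is a psi)); lra).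
  apply sqrt_le_1_alt. rewrite <- (Rabs_sq (Ic a psi)), <- (Rabs_sq (Is a psi)).
  pose proof (Rabs_pos (Ic a psi)); pose proof (Rabs_pos (Is a psi)). nra.
Qed.

Lemma cont_psi l j : cont (fun y => l * y + psum j y).
Proof. apply cont_plus. apply cont_mult; auto using cont_const, cont_id. apply cont_psum. Qed.

Lemma Lip_psi l j : LipOn (fun y => l * y + psum j y) (Rabs l + PI / 2 * INR (Ssum j)).
Proof.
  intros y z Hy Hz.
  replace (l * y + psum j y - (l * z + psum j z)) with (l * (y - z) + (psum j y - psum j z)) by ring.
  eapply Rle_trans. apply Rabs_triang. rewrite Rabs_mult.
  pose proof (Lip_psum j y z Hy Hz). lra.
Qed.

Lemma err_bound Ka Ma l j : 0 <= Ka -> 0 <= Ma ->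
  (Ka + Ma * (Rabs l + PI / 2 * INR (Ssum j))) / INR (Nseq j) <=
  (Ka + Ma * Rabs l + 2 * Ma) / 16 ^ j.
Proof.
  intros HK HM. pose proof (Nseq_big j). pose proof (pos_INR (Ssum j)). pose proof PI_4.
  pose proof (Rabs_pos l). assert (0 < 16 ^ j) by (apply pow_lt; lra).
  set (S := INR (Ssum j)) in *. set (N := INR (Nseq j)) in *. set (D := Ka + Ma * Rabs l + 2 * Ma).
  assert (HN : 0 < N) by nra.
  assert (0 <= Ma * S * (2 - PI/2)) by (apply Rmult_le_pos; [apply Rmult_le_pos|]; lra).
  assert (0 <= S * Ka) by (apply Rmult_le_pos; lra).
  assert (0 <= S * (Ma * Rabs l)) by (apply Rmult_le_pos; [|apply Rmult_le_pos]; lra).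
  assert (Ka + Ma * (Rabs l + PI / 2 * S) <= D * (1 + S)) by (unfold D; nra).
  apply (Rmult_le_reg_r (N * 16^j)); [nra|].
  replace ((Ka + Ma * (Rabs l + PI / 2 * S)) / N * (N * 16 ^ j)) with ((Ka + Ma * (Rabs l + PI / 2 * S)) * 16^j) by (field; lra).
  replace (D / 16 ^ j * (N * 16 ^ j)) with (D * N) by (field; lra).
  assert (0 <= D) by (unfold D; nra). nra.
Qed.

Lemma pow78 j : 1 <= (7/8)^j * 16^j.
Proof. rewrite <- Rpow_mult_distr. apply pow_R1_Rle. lra. Qed.

Lemma mix_full a Ka Ma l : cont a -> 0 <= Ka -> 0 <= Ma -> LipOn a Ka -> BndOn a Ma ->
  forall j, Zn a (fun y => l * y + psum j y) <=
    (7/8)^j * (4 * PI * Ma + 256 * PI^2 * (Ka + Ma * Rabs l + 2 * Ma)).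
Proof.
  intros Ha HK HM La Ba. pose proof PI_RGT_0. pose proof (Rabs_pos l).
  set (D := Ka + Ma * Rabs l + 2 * Ma). assert (HD : 0 <= D) by (unfold D; nra).
  induction j.
  - simpl. rewrite Rmult_1_l. pose proof (Zn_triv a Ma (fun y => l * y + 0) Ha (cont_psi l 0) Ba). 
    assert (0 <= 256 * PI^2 * D) by (apply Rmult_le_pos; auto; nra). lra.
  - rewrite (Zn_ext a _ (fun y => (l * y + psum j y) + PI/2 + (-(PI/2)) * cos (INR (Nseq j) * y)))
      by (intros; simpl; unfold bdig; field).
    eapply Rle_trans.
    apply (peel a _ Ka Ma (Rabs l + PI / 2 * INR (Ssum j))); auto using cont_psi, Lip_psi, Nseq_ge1.
    { pose proof (pos_INR (Ssum j)). nra. }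
    pose proof (Jc_half). pose proof (err_bound Ka Ma l j HK HM). fold D in H2.
    pose proof (Zn_triv a Ma _ Ha (cont_psi l j) Ba).
    assert (0 <= Zn a (fun y => l * y + psum j y)) by apply sqrt_pos.
    set (E := (Ka + Ma * (Rabs l + PI / 2 * INR (Ssum j))) / INR (Nseq j)) in *.
    replace (2 * (16 * PI ^ 2 * (Ka + Ma * (Rabs l + PI / 2 * INR (Ssum j))) / INR (Nseq j))) with (32 * PI^2 * E)
      by (unfold E; field; pose proof (Nseq_ge1 j); apply not_0_INR; lia).
    pose proof (pow78 j). assert (0 < 16 ^ j) by (apply pow_lt; lra).
    assert (HE : 32 * PI^2 * E <= /8 * (7/8)^j * (4 * PI * Ma + 256 * PI ^ 2 * D)).
    { assert (HH : D / 16^j <= (7/8)^j * D).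
      { apply (Rmult_le_reg_r (16^j)); auto. unfold Rdiv. rewrite Rmult_assoc, Rinv_l, Rmult_1_r by lra. nra. }
      assert (0 <= 4 * PI * Ma) by nra. assert (0 <= (7/8)^j) by (apply pow_le; lra).
      assert (0 <= PI^2) by nra.
      apply Rle_trans with (32 * PI^2 * ((7/8)^j * D)). apply Rmult_le_compat_l; [nra|]. lra.
      nra. }
    change ((7/8)^(S j)) with (7/8 * (7/8)^j).
    assert (Rabs (Jc (-(PI/2))) * Zn a (fun y => l * y + psum j y) <= 3/4 * ((7/8)^j * (4 * PI * Ma + 256 * PI ^ 2 * D)))
      by (apply Rmult_le_compat; auto using Rabs_pos).
    lra.
Qed.

Lemma mix_all a Ka Ma l n tau : cont a -> 0 <= Ka -> 0 <= Ma -> LipOn a Ka -> BndOn a Ma ->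
  0 <= tau <= PI ->
  Zn a (fun y => Phi n tau y + l * y) <=
    (7/8)^n * (4 * PI * Ma + 288 * PI^2 * (Ka + Ma * Rabs l + 2 * Ma)).
Proof.
  intros Ha HK HM La Ba Ht. pose proof PI_RGT_0. pose proof (Rabs_pos l).
  set (D := Ka + Ma * Rabs l + 2 * Ma). assert (HD : 0 <= D) by (unfold D; nra).
  rewrite (Zn_ext a _ (fun y => (l * y + psum n y) + tau/2 + (-(tau/2)) * cos (INR (Nseq n) * y)))
      by (intros; unfold Phi, bdig; field).
  eapply Rle_trans.
  apply (peel a _ Ka Ma (Rabs l + PI / 2 * INR (Ssum n))); auto using cont_psi, Lip_psi, Nseq_ge1.
  { pose proof (pos_INR (Ssum n)). nra. }
  pose proof (Jc_abs (-(tau/2))). pose proof (err_bound Ka Ma l n HK HM). fold D in H2.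
  pose proof (mix_full a Ka Ma l Ha HK HM La Ba n). fold D in H3.
  assert (0 <= Zn a (fun y => l * y + psum n y)) by apply sqrt_pos.
  set (E := (Ka + Ma * (Rabs l + PI / 2 * INR (Ssum n))) / INR (Nseq n)) in *.
  replace (2 * (16 * PI ^ 2 * (Ka + Ma * (Rabs l + PI / 2 * INR (Ssum n))) / INR (Nseq n))) with (32 * PI^2 * E)
    by (unfold E; field; pose proof (Nseq_ge1 n); apply not_0_INR; lia).
  pose proof (pow78 n). assert (0 < 16 ^ n) by (apply pow_lt; lra).
  assert (0 <= (7/8)^n) by (apply pow_le; lra).
  assert (HE : E <= (7/8)^n * D).
  { apply Rle_trans with (D / 16^n); auto.
    apply (Rmult_le_reg_r (16^n)); auto. unfold Rdiv. rewrite Rmult_assoc, Rinv_l, Rmult_1_r by lra. nra. }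
  assert (Rabs (Jc (-(tau/2))) * Zn a (fun y => l * y + psum n y) <= Zn a (fun y => l * y + psum n y)).
  { rewrite <- (Rmult_1_l (Zn _ _)) at 2. apply Rmult_le_compat_r; auto. }
  nra.
Qed.

Definition nidx (s : R) : nat := Z.to_nat (Int_part (s / PI)).
Definition Uf (s y : R) : R := bdig (nidx s) y.

Lemma Int_part_unique z x : IZR z <= x < IZR z + 1 -> Int_part x = z.
Proof.
  intros [H1 H2]. destruct (base_Int_part x) as [H3 H4].
  assert (A : (z < Int_part x + 1)%Z) by (apply lt_IZR; rewrite plus_IZR; simpl; lra).
  assert (B : (Int_part x < z + 1)%Z) by (apply lt_IZR; rewrite plus_IZR; simpl; lra).
  lia.
Qed.

Lemma nidx_in (m : nat) s : INR m * PI < s < (INR m + 1) * PI -> nidx s = m.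
Proof.
  intros Hs. pose proof PI_RGT_0. unfold nidx.
  rewrite (Int_part_unique (Z.of_nat m)). apply Nat2Z.id.
  rewrite <- INR_IZR_INZ. split.
  - apply Rlt_le. apply (Rmult_lt_reg_r PI); auto. unfold Rdiv; rewrite Rmult_assoc, Rinv_l; lra.
  - apply (Rmult_lt_reg_r PI); auto. unfold Rdiv; rewrite Rmult_assoc, Rinv_l; lra.
Qed.

Lemma nidx_neg s : s < 0 -> nidx s = 0%nat.
Proof.
  intros Hs. pose proof PI_RGT_0. unfold nidx.
  destruct (base_Int_part (s / PI)) as [H1 _].
  assert (s / PI < 0) by (unfold Rdiv; apply Rmult_neg_pos; auto; apply Rinv_0_lt_compat; auto).
  assert (Int_part (s / PI) < 0)%Z by (apply lt_IZR; simpl; lra).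
  destruct (Int_part (s / PI)); simpl; lia.
Qed.

Lemma nidx_spec t : 0 <= t -> INR (nidx t) * PI <= t < (INR (nidx t) + 1) * PI.
Proof.
  intros Ht. pose proof PI_RGT_0. unfold nidx.
  destruct (base_Int_part (t / PI)) as [H1 H2].
  assert (0 <= t / PI) by (unfold Rdiv; apply Rmult_le_pos; auto; apply Rlt_le, Rinv_0_lt_compat; auto).
  assert (-1 < Int_part (t / PI))%Z by (apply lt_IZR; simpl; lra).
  assert (0 <= Int_part (t / PI))%Z by lia.
  rewrite INR_IZR_INZ, Z2Nat.id by auto.
  split.
  - apply (Rmult_le_reg_r (/PI)). apply Rinv_0_lt_compat; auto. rewrite Rmult_assoc, Rinv_r, Rmult_1_r by lra. auto.
  - apply (Rmult_lt_reg_r (/PI)). apply Rinv_0_lt_compat; auto. rewrite Rmult_assoc, Rinv_r, Rmult_1_r by lra. lra.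
Qed.

Lemma is_RInt_U_steps y (m : nat) : is_RInt (fun s => Uf s y) 0 (INR m * PI) (psum m y).
Proof.
  pose proof PI_RGT_0.
  induction m.
  - simpl. rewrite Rmult_0_l. apply (is_RInt_point (V:=R_NormedModule)).
  - replace (psum (S m) y) with (plus (psum m y) (scal (INR (S m) * PI - INR m * PI) (bdig m y)))
      by (rewrite S_INR; simpl; unfold plus, scal; simpl; unfold mult; simpl; ring).
    apply (is_RInt_Chasles (V:=R_NormedModule)) with (INR m * PI); auto.
    apply (is_RInt_ext (V:=R_NormedModule) (fun _ => bdig m y)).
    2: apply (is_RInt_const (V:=R_NormedModule)).
    intros s Hs. rewrite S_INR in Hs. rewrite Rmin_left, Rmax_right in Hs by nra.
    unfold Uf. rewrite (nidx_in m s); auto.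
Qed.

Lemma RInt_U y t : 0 <= t ->
  RInt (fun s => Uf s y) 0 t = Phi (nidx t) (t - INR (nidx t) * PI) y.
Proof.
  intros Ht. apply is_RInt_unique.
  pose proof (nidx_spec t Ht) as Hs. set (m := nidx t) in *.
  replace (Phi m (t - INR m * PI) y) with (plus (psum m y) (scal (t - INR m * PI) (bdig m y)))
    by (unfold Phi, plus, scal; simpl; unfold mult; simpl; ring).
  apply (is_RInt_Chasles (V:=R_NormedModule)) with (INR m * PI).
  apply is_RInt_U_steps.
  apply (is_RInt_ext (V:=R_NormedModule) (fun _ => bdig m y)).
  2: apply (is_RInt_const (V:=R_NormedModule)).
  intros s Hs'. rewrite Rmin_left, Rmax_right in Hs' by lra.
  unfold Uf. rewrite (nidx_in m s); auto. lra.
Qed.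

Lemma ex_RInt_U y a b : ex_RInt (fun s => Uf s y) a b.
Proof.
  assert (H0 : forall c, ex_RInt (fun s => Uf s y) 0 c).
  { intros c. destruct (Rle_dec 0 c).
    - exists (RInt (fun s => Uf s y) 0 c). rewrite RInt_U by auto.
      pose proof (nidx_spec c r) as Hs. set (m := nidx c) in *.
      replace (Phi m (c - INR m * PI) y) with (plus (psum m y) (scal (c - INR m * PI) (bdig m y)))
        by (unfold Phi, plus, scal; simpl; unfold mult; simpl; ring).
      apply (is_RInt_Chasles (V:=R_NormedModule)) with (INR m * PI).
      apply is_RInt_U_steps.
      apply (is_RInt_ext (V:=R_NormedModule) (fun _ => bdig m y)).
      2: apply (is_RInt_const (V:=R_NormedModule)).
      intros s Hs'. rewrite Rmin_left, Rmax_right in Hs' by lra.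
      unfold Uf. rewrite (nidx_in m s); auto. lra.
    - apply (ex_RInt_swap (V:=R_NormedModule)).
      exists (scal (0 - c) (bdig 0 y)).
      apply (is_RInt_ext (V:=R_NormedModule) (fun _ => bdig 0 y)).
      2: apply (is_RInt_const (V:=R_NormedModule)).
      intros s Hs'. rewrite Rmin_left, Rmax_right in Hs' by lra.
      unfold Uf. rewrite nidx_neg; auto. lra. }
  apply (ex_RInt_Chasles (V:=R_NormedModule)) with 0; auto.
  apply (ex_RInt_swap (V:=R_NormedModule)); auto.
Qed.

Lemma exp_le' x y : x <= y -> exp x <= exp y.
Proof. intros [H|H]. apply Rlt_le, exp_increasing; auto. subst; lra. Qed.

Definition gk (N : R) (k : nat) (y : R) := N ^ k * cos (N * y + INR k * (PI / 2)).

Lemma gk_der N k y : is_derive (gk N k) y (gk N (S k) y).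
Proof.
  unfold gk. auto_derive; auto. rewrite S_INR.
  replace (N * y + (INR k + 1) * (PI / 2)) with ((N * y + INR k * (PI / 2)) + PI/2) by ring.
  rewrite cos_plus, cos_PI2, sin_PI2. simpl; ring.
Qed.

Definition hk (N : R) (k : nat) (y : R) :=
  match k with O => (1 - cos (N * y)) / 2 | S _ => -(1/2) * gk N k y end.

Lemma hk_der N k y : is_derive (hk N k) y (hk N (S k) y).
Proof.
  destruct k.
  - change (is_derive (fun y => (1 - cos (N*y))/2) y (-(1/2) * (N^1 * cos(N*y + INR 1 * (PI/2))))).
    auto_derive; auto. simpl.
    replace (N * y + 1 * (PI / 2)) with (N * y + PI/2) by ring.
    rewrite cos_plus, cos_PI2, sin_PI2. change (- (N * 1 * - sin (N * y)) * / 2 = - (1 / 2) * (N * 1 * (cos (N * y) * 0 - sin (N * y) * 1))). field.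
  - unfold hk. apply (is_derive_scal (fun y => gk N (S k) y)). apply gk_der.
Qed.

Lemma Derive_n_hk N k y : Derive_n (hk N 0) k y = hk N k y.
Proof.
  revert y. induction k; intros y; auto.
  simpl Derive_n. rewrite (Derive_ext _ (hk N k)) by auto.
  apply is_derive_unique, hk_der.
Qed.

Lemma smooth_hk N : smooth1 (hk N 0).
Proof.
  intros k x. apply (ex_derive_ext (hk N k)). intros; rewrite Derive_n_hk; auto.
  eexists; apply hk_der.
Qed.

Lemma bdig_hk j : bdig j = hk (INR (Nseq j)) 0.
Proof. reflexivity. Qed.

Lemma smooth_U t : smooth1 (Uf t).
Proof. unfold Uf. rewrite bdig_hk. apply smooth_hk. Qed.

Lemma per_bdig j y : bdig j (y + 2 * PI) = bdig j y.
Proof.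
  unfold bdig. replace (INR (Nseq j) * (y + 2 * PI)) with (INR (Nseq j) * y + 2 * INR (Nseq j) * PI) by ring.
  rewrite cos_period. auto.
Qed.

Lemma per_U t : periodic2pi (Uf t).
Proof. intros y. unfold Uf. apply per_bdig. Qed.

Lemma bdig_bnd j y : 0 <= bdig j y <= 1.
Proof. unfold bdig. pose proof (COS_bound (INR (Nseq j) * y)). lra. Qed.

Lemma U_bnd t y : Rabs (Uf t y) <= 1.
Proof. unfold Uf. pose proof (bdig_bnd (nidx t) y). apply Rabs_le; lra. Qed.

Lemma Derive_bdig j y : Derive (bdig j) y = INR (Nseq j) * sin (INR (Nseq j) * y) / 2.
Proof. apply is_derive_unique. unfold bdig. auto_derive; auto. field. Qed.

Lemma pow_aux j : 2 * 16 ^ (S j) <= 64 ^ (2 * j + 1).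
Proof.
  induction j. simpl. lra.
  replace (2 * S j + 1)%nat with (S (S (2 * j + 1))) by lia.
  change (16 ^ S (S j)) with (16 * 16 ^ S j). change (64 ^ S (S (2 * j + 1))) with (64 * (64 * 64 ^ (2 * j + 1))).
  assert (0 <= 16 ^ S j) by (apply pow_le; lra). lra.
Qed.

Lemma Nseq_le j : INR (Nseq j) <= 64 ^ (j * j).
Proof.
  induction j. simpl. lra.
  rewrite Nseq_S. replace (S j * S j)%nat with (j * j + (2 * j + 1))%nat by lia.
  rewrite pow_add. pose proof (pow_aux j). pose proof (pos_INR (Nseq j)).
  assert (0 <= 64 ^ (2 * j + 1)) by (apply pow_le; lra).
  assert (0 <= 2 * 16 ^ S j) by (apply Rmult_le_pos; [lra| apply pow_le; lra]).
  apply Rle_trans with ((2 * 16 ^ S j) * 64 ^ (j*j)). apply Rmult_le_compat_l; auto.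
  rewrite Rmult_comm. apply Rmult_le_compat_l; auto. apply pow_le; lra.
Qed.

Lemma ceil_ge t : t <= IZR (ceil t).
Proof. unfold ceil. rewrite opp_IZR. destruct (base_Int_part (- t)). lra. Qed.

Lemma nidx_le_ceil t : 0 <= t -> 0 <= INR (nidx t) <= IZR (ceil t).
Proof.
  intros Ht. pose proof (nidx_spec t Ht). pose proof (ceil_ge t). pose proof PI_gt3.
  pose proof (pos_INR (nidx t)). split; auto. nra.
Qed.

Lemma pow64_exp j c : 0 <= INR j <= c -> 64 ^ (j * j) <= exp (ln 64 * c ^ 2).
Proof.
  intros Hj. rewrite <- Rpower_pow by lra. unfold Rpower.
  apply exp_le'. rewrite mult_INR. 
  assert (0 < ln 64) by (rewrite <- ln_1; apply ln_increasing; lra).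
  rewrite Rmult_comm. apply Rmult_le_compat_l; [lra|]. simpl. nra.
Qed.

Lemma Nidx_exp t : 0 <= t -> INR (Nseq (nidx t)) <= exp (ln 64 * IZR (ceil t) ^ 2).
Proof.
  intros Ht. eapply Rle_trans. apply Nseq_le. apply pow64_exp. apply nidx_le_ceil; auto.
Qed.

Lemma H1_U t : 0 <= t -> H1_norm_T (Uf t) <= 6 * exp (ln 64 * IZR (ceil t) ^ 2).
Proof.
  intros Ht. unfold H1_norm_T, Uf. set (j := nidx t).
  set (N := INR (Nseq j)). assert (HN : 1 <= N) by (unfold N; apply (le_INR 1); apply Nseq_ge1).
  pose proof PI_RGT_0. pose proof PI_4.
  rewrite (RInt_ext _ (fun y => bdig j y ^ 2 + (N * sin (N * y) / 2) ^ 2)) by (intros; rewrite Derive_bdig; auto).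
  assert (RInt (fun y => bdig j y ^ 2 + (N * sin (N * y) / 2) ^ 2) (-PI) PI <= RInt (fun _ => (1 + N)^2) (-PI) PI).
  { apply RInt_le; [lra| | apply cont_ex, cont_const |].
    - apply cont_ex, cont_der; intros; unfold bdig; auto_derive; auto.
    - intros y _. pose proof (bdig_bnd j y). pose proof (SIN_bound (N * y)).
      assert (sin (N*y) ^2 <= 1) by nra. assert ((N * sin (N * y) / 2)^2 = N^2 * sin (N*y)^2 / 4) by field.
      assert ((N * sin (N * y) / 2)^2 <= N^2) by nra. nra. }
  rewrite RInt_const' in H1.
  apply Rle_trans with (sqrt ((3 * (1 + N))^2)).
  - apply sqrt_le_1_alt. nra.
  - rewrite sqrt_pow2 by lra. pose proof (Nidx_exp t Ht). fold j N in H2. lra.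
Qed.

Lemma RInt_sin_lin m : RInt (fun x => sin (m * x)) (-PI) PI = 0.
Proof.
  destruct (Req_dec m 0) as [->|Hm].
  - rewrite (RInt_ext _ (fun _ => 0)) by (intros; rewrite Rmult_0_l, sin_0; auto).
    rewrite RInt_const'. simpl; ring.
  - apply is_RInt_unique.
    replace 0 with (minus ((fun x => - cos (m * x) / m) PI) ((fun x => - cos (m * x) / m) (-PI))).
    + apply (is_RInt_derive (V:=R_CompleteNormedModule) (fun x => - cos (m * x) / m)).
      * intros; auto_derive; auto. field; auto.
      * intros. apply cont_der; intros; auto_derive; auto.
    + unfold minus, plus, opp; simpl. replace (m * - PI) with (- (m * PI)) by ring.
      rewrite cos_neg. field; auto.
Qed.

Lemma RInt_cos_int (m : Z) : RInt (fun x => cos (IZR m * x)) (-PI) PI = if Z.eqb m 0 then 2 * PI else 0.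
Proof.
  destruct (Z.eqb_spec m 0) as [->|Hm].
  - rewrite (RInt_ext _ (fun _ => 1)) by (intros; rewrite Rmult_0_l, cos_0; auto).
    rewrite RInt_const'. simpl; ring.
  - assert (HmR : IZR m <> 0) by (apply not_0_IZR; auto).
    apply is_RInt_unique.
    replace 0 with (minus ((fun x => sin (IZR m * x) / IZR m) PI) ((fun x => sin (IZR m * x) / IZR m) (-PI))).
    + apply (is_RInt_derive (V:=R_CompleteNormedModule) (fun x => sin (IZR m * x) / IZR m)).
      * intros; auto_derive; auto. field; auto.
      * intros. apply cont_der; intros; auto_derive; auto.
    + unfold minus, plus, opp; simpl. replace (IZR m * - PI) with (- (IZR m * PI)) by ring.
      rewrite sin_neg. rewrite (sin_eq_0_1 (IZR m * PI)) by (exists m; auto). field; auto.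
Qed.

Lemma RInt_cos_int_bnd (m : Z) : Rabs (RInt (fun x => cos (IZR m * x)) (-PI) PI) <= 2 * PI.
Proof. rewrite RInt_cos_int. pose proof PI_RGT_0. destruct (Z.eqb m 0); rewrite Rabs_right; lra. Qed.

Lemma dbl_sep (c1 c2 c3 c4 d1 d2 d3 d4 : R -> R) :
  cont c1 -> cont c2 -> cont c3 -> cont c4 -> cont d1 -> cont d2 -> cont d3 -> cont d4 ->
  RInt (fun x => RInt (fun y => c1 x * d1 y + c2 x * d2 y + c3 x * d3 y + c4 x * d4 y) (-PI) PI) (-PI) PI =
  RInt c1 (-PI) PI * RInt d1 (-PI) PI + RInt c2 (-PI) PI * RInt d2 (-PI) PI +
  RInt c3 (-PI) PI * RInt d3 (-PI) PI + RInt c4 (-PI) PI * RInt d4 (-PI) PI.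
Proof.
  intros H1 H2 H3 H4 G1 G2 G3 G4.
  assert (E : forall x, RInt (fun y => c1 x * d1 y + c2 x * d2 y + c3 x * d3 y + c4 x * d4 y) (-PI) PI =
     c1 x * RInt d1 (-PI) PI + c2 x * RInt d2 (-PI) PI + c3 x * RInt d3 (-PI) PI + c4 x * RInt d4 (-PI) PI).
  { intros x.
    rewrite RInt_plus'. rewrite RInt_plus'. rewrite RInt_plus'.
    rewrite !RInt_scal' by (apply cont_ex; auto). auto.
    all: try (apply cont_ex; repeat apply cont_plus; apply cont_mult; auto using cont_const). 
    all: try (apply cont_ex; repeat apply cont_plus; repeat apply cont_mult; auto using cont_const). }
  rewrite (RInt_ext _ _ _ _ (fun x _ => E x)).
  rewrite RInt_plus'. rewrite RInt_plus'. rewrite RInt_plus'.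
  rewrite (RInt_ext (fun x => c1 x * RInt d1 (-PI) PI) (fun x => RInt d1 (-PI) PI * c1 x)) by (intros; apply Rmult_comm).
  rewrite (RInt_ext (fun x => c2 x * RInt d2 (-PI) PI) (fun x => RInt d2 (-PI) PI * c2 x)) by (intros; apply Rmult_comm).
  rewrite (RInt_ext (fun x => c3 x * RInt d3 (-PI) PI) (fun x => RInt d3 (-PI) PI * c3 x)) by (intros; apply Rmult_comm).
  rewrite (RInt_ext (fun x => c4 x * RInt d4 (-PI) PI) (fun x => RInt d4 (-PI) PI * c4 x)) by (intros; apply Rmult_comm).
  rewrite !RInt_scal' by (apply cont_ex; auto). simpl; ring.
  all: try (apply cont_ex; repeat apply cont_plus; repeat apply cont_mult; auto using cont_const). 
Qed.

Definition rhoE (f0 g0 P : R -> R) (x y : R) := f0 y * sin (x - P y) + g0 y * cos (x - P y).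

Lemma cont_trig_ph (tr : R -> R) (c : R) P : cont tr -> cont P -> cont (fun y => tr (c * y - P y)).
Proof. intros Ht HP. apply (cont_comp (fun y => c * y - P y) tr); auto. apply cont_minus; auto. apply cont_mult; auto using cont_const, cont_id. Qed.
Lemma cont_trig_lin (tr : R -> R) (c : R) : cont tr -> cont (fun y => tr (c * y)).
Proof. intros Ht. apply (cont_comp (fun y => c * y) tr); auto. apply cont_mult; auto using cont_const, cont_id. Qed.

Section Four.
Variables (f0 g0 P : R -> R) (k l : Z).
Hypotheses (Hf : cont f0) (Hg : cont g0) (HP : cont P).

Let a1 y := (f0 y * sin (IZR l * y - P y) + g0 y * cos (IZR l * y - P y)) / 2.
Let a2 y := (f0 y * cos (IZR l * y - P y) - g0 y * sin (IZR l * y - P y)) / 2.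
Let a3 y := (f0 y * sin ((- IZR l) * y - P y) + g0 y * cos ((- IZR l) * y - P y)) / 2.
Let a4 y := (f0 y * cos ((- IZR l) * y - P y) - g0 y * sin ((- IZR l) * y - P y)) / 2.

Lemma cont_a1 : cont a1.
Proof. unfold a1. apply cont_mult; [|apply cont_const]. apply cont_plus; apply cont_mult; auto; apply cont_trig_ph; auto using cont_sin, cont_cos. Qed.
Lemma cont_a2 : cont a2.
Proof. unfold a2. apply cont_mult; [|apply cont_const]. apply cont_minus; apply cont_mult; auto; apply cont_trig_ph; auto using cont_sin, cont_cos. Qed.
Lemma cont_a3 : cont a3.
Proof. unfold a3. apply cont_mult; [|apply cont_const]. apply cont_plus; apply cont_mult; auto; apply cont_trig_ph; auto using cont_sin, cont_cos. Qed.
Lemma cont_a4 : cont a4.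
Proof. unfold a4. apply cont_mult; [|apply cont_const]. apply cont_minus; apply cont_mult; auto; apply cont_trig_ph; auto using cont_sin, cont_cos. Qed.

Lemma id_re x y : rhoE f0 g0 P x y * cos (IZR k * x + IZR l * y) =
  cos (IZR (1 + k) * x) * a1 y + sin (IZR (1 + k) * x) * a2 y +
  cos (IZR (1 - k) * x) * a3 y + sin (IZR (1 - k) * x) * a4 y.
Proof.
  unfold rhoE, a1, a2, a3, a4. rewrite plus_IZR, minus_IZR.
  replace ((1 + IZR k) * x) with (x + IZR k * x) by ring.
  replace ((1 - IZR k) * x) with (x - IZR k * x) by ring.
  replace (- IZR l * y) with (- (IZR l * y)) by ring.
  repeat rewrite ?sin_plus, ?cos_plus, ?sin_minus, ?cos_minus, ?sin_neg, ?cos_neg.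
  field.
Qed.

Lemma id_im x y : rhoE f0 g0 P x y * sin (IZR k * x + IZR l * y) =
  cos (IZR (1 + k) * x) * (- a2 y) + sin (IZR (1 + k) * x) * a1 y +
  cos (IZR (1 - k) * x) * a4 y + sin (IZR (1 - k) * x) * (- a3 y).
Proof.
  unfold rhoE, a1, a2, a3, a4. rewrite plus_IZR, minus_IZR.
  replace ((1 + IZR k) * x) with (x + IZR k * x) by ring.
  replace ((1 - IZR k) * x) with (x - IZR k * x) by ring.
  replace (- IZR l * y) with (- (IZR l * y)) by ring.
  repeat rewrite ?sin_plus, ?cos_plus, ?sin_minus, ?cos_minus, ?sin_neg, ?cos_neg.
  field.
Qed.


Let C (m : Z) := RInt (fun x => cos (IZR m * x)) (-PI) PI.

Lemma re_formula : fourier_re (rhoE f0 g0 P) k l =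
  / (2 * PI) ^ 2 * (C (1 + k) * RInt a1 (-PI) PI + C (1 - k) * RInt a3 (-PI) PI).
Proof.
  unfold fourier_re.
  rewrite (RInt_ext (fun x => RInt (fun y => rhoE f0 g0 P x y * cos (IZR k * x + IZR l * y)) (-PI) PI)
    (fun x => RInt (fun y => cos (IZR (1 + k) * x) * a1 y + sin (IZR (1 + k) * x) * a2 y +
       cos (IZR (1 - k) * x) * a3 y + sin (IZR (1 - k) * x) * a4 y) (-PI) PI))
    by (intros; apply RInt_ext; intros; apply id_re).
  rewrite dbl_sep; auto using cont_a1, cont_a2, cont_a3, cont_a4, cont_trig_lin, cont_sin, cont_cos.
  rewrite !RInt_sin_lin. unfold C. ring.
Qed.

Lemma RInt_neg h : cont h -> RInt (fun y => - h y) (-PI) PI = - RInt h (-PI) PI.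
Proof.
  intros Hh. rewrite (RInt_ext _ (fun y => -1 * h y)) by (intros; simpl; ring).
  rewrite RInt_scal' by (apply cont_ex; auto). simpl; ring.
Qed.

Lemma im_formula : fourier_im (rhoE f0 g0 P) k l =
  / (2 * PI) ^ 2 * (C (1 + k) * (- RInt a2 (-PI) PI) + C (1 - k) * RInt a4 (-PI) PI).
Proof.
  unfold fourier_im.
  rewrite (RInt_ext (fun x => RInt (fun y => rhoE f0 g0 P x y * sin (IZR k * x + IZR l * y)) (-PI) PI)
    (fun x => RInt (fun y => cos (IZR (1 + k) * x) * (- a2 y) + sin (IZR (1 + k) * x) * a1 y +
       cos (IZR (1 - k) * x) * a4 y + sin (IZR (1 - k) * x) * (- a3 y)) (-PI) PI))
    by (intros; apply RInt_ext; intros; apply id_im).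
  rewrite dbl_sep; auto using cont_a1, cont_a2, cont_a3, cont_a4, cont_trig_lin, cont_sin, cont_cos.
  2: apply (cont_comp a2 (fun u => - u)); auto using cont_a2; apply cont_der; intros; auto_derive; auto.
  2: apply (cont_comp a3 (fun u => - u)); auto using cont_a3; apply cont_der; intros; auto_derive; auto.
  rewrite !RInt_sin_lin. rewrite RInt_neg by apply cont_a2. unfold C. ring.
Qed.


Lemma RInt_asin c a : cont a ->
  RInt (fun y => a y * sin (c * y - P y)) (-PI) PI = - Is a (fun y => P y + - c * y).
Proof.
  intros Ha. unfold Is. rewrite <- RInt_neg.
  - apply RInt_ext. intros. replace (c * x - P x) with (- (P x + - c * x)) by ring. rewrite sin_neg. simpl; ring.
  - apply cont_mult; auto. apply (cont_comp (fun y => P y + - c * y) sin); auto using cont_sin.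
    apply cont_plus; auto. apply cont_mult; auto using cont_const, cont_id.
Qed.

Lemma RInt_acos c a : cont a ->
  RInt (fun y => a y * cos (c * y - P y)) (-PI) PI = Ic a (fun y => P y + - c * y).
Proof.
  intros Ha. unfold Ic. apply RInt_ext. intros. replace (c * x - P x) with (- (P x + - c * x)) by ring.
  rewrite cos_neg. auto.
Qed.

Lemma cont_asin c a : cont a -> cont (fun y => a y * sin (c * y - P y)).
Proof. intros; apply cont_mult; auto; apply cont_trig_ph; auto using cont_sin. Qed.
Lemma cont_acos c a : cont a -> cont (fun y => a y * cos (c * y - P y)).
Proof. intros; apply cont_mult; auto; apply cont_trig_ph; auto using cont_cos. Qed.

Lemma RInt_half_sum (u v : R -> R) : cont u -> cont v ->
  RInt (fun y => (u y + v y) / 2) (-PI) PI = / 2 * (RInt u (-PI) PI + RInt v (-PI) PI).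
Proof.
  intros Hu Hv. rewrite (RInt_ext _ (fun y => /2 * (u y + v y))) by (intros; simpl; field).
  rewrite RInt_scal', RInt_plus'; auto using cont_ex. apply cont_ex, cont_plus; auto.
Qed.
Lemma RInt_half_diff (u v : R -> R) : cont u -> cont v ->
  RInt (fun y => (u y - v y) / 2) (-PI) PI = / 2 * (RInt u (-PI) PI - RInt v (-PI) PI).
Proof.
  intros Hu Hv. rewrite (RInt_ext _ (fun y => /2 * (u y - v y))) by (intros; simpl; field).
  rewrite RInt_scal', RInt_minus'; auto using cont_ex. apply cont_ex, cont_minus; auto.
Qed.

Lemma Ic_le a psi : Rabs (Ic a psi) <= Zn a psi.
Proof. apply sqrt_ge_abs. Qed.
Lemma Is_le a psi : Rabs (Is a psi) <= Zn a psi.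
Proof. unfold Zn. rewrite Rplus_comm. apply sqrt_ge_abs. Qed.
Lemma Zn_pos a psi : 0 <= Zn a psi.
Proof. apply sqrt_pos. Qed.

Let psm := fun y => P y + - IZR l * y.
Let psp := fun y => P y + - - IZR l * y.

Lemma half_bnd X Y A B : Rabs X <= A -> Rabs Y <= B ->
  Rabs (/2 * (X + Y)) <= (A + B) / 2 /\ Rabs (/2 * (X - Y)) <= (A + B) / 2.
Proof.
  intros H1 H2. rewrite !Rabs_mult, Rabs_inv, (Rabs_right 2) by lra.
  pose proof (Rabs_triang X Y). pose proof (Rabs_triang X (-Y)). rewrite Rabs_Ropp in H0.
  split; unfold Rminus; lra.
Qed.

Lemma A_bnds :
  Rabs (RInt a1 (-PI) PI) <= (Zn f0 psm + Zn g0 psm) / 2 /\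
  Rabs (RInt a2 (-PI) PI) <= (Zn f0 psm + Zn g0 psm) / 2 /\
  Rabs (RInt a3 (-PI) PI) <= (Zn f0 psp + Zn g0 psp) / 2 /\
  Rabs (RInt a4 (-PI) PI) <= (Zn f0 psp + Zn g0 psp) / 2.
Proof.
  unfold a1, a2, a3, a4.
  rewrite !RInt_half_sum, !RInt_half_diff; auto using cont_asin, cont_acos.
  rewrite !RInt_asin, !RInt_acos; auto.
  fold psm psp.
  repeat split.
  - apply half_bnd; [rewrite Rabs_Ropp; apply Is_le | apply Ic_le].
  - apply half_bnd; [apply Ic_le | rewrite Rabs_Ropp; apply Is_le].
  - apply half_bnd; [rewrite Rabs_Ropp; apply Is_le | apply Ic_le].
  - apply half_bnd; [apply Ic_le | rewrite Rabs_Ropp; apply Is_le].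
Qed.

Lemma four_zero : (k <> 1)%Z -> (k <> -1)%Z -> fourier_abs2 (rhoE f0 g0 P) k l = 0.
Proof.
  intros H1 H2. unfold fourier_abs2. rewrite re_formula, im_formula. unfold C.
  rewrite !RInt_cos_int.
  replace (Z.eqb (1 + k) 0) with false by (symmetry; apply Z.eqb_neq; lia).
  replace (Z.eqb (1 - k) 0) with false by (symmetry; apply Z.eqb_neq; lia).
  ring.
Qed.

Lemma four_bnd : fourier_abs2 (rhoE f0 g0 P) k l <= (Zn f0 psm + Zn g0 psm + Zn f0 psp + Zn g0 psp) ^ 2.
Proof.
  destruct A_bnds as [B1 [B2 [B3 B4]]].
  pose proof (Zn_pos f0 psm). pose proof (Zn_pos g0 psm). pose proof (Zn_pos f0 psp). pose proof (Zn_pos g0 psp).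
  set (W := Zn f0 psm + Zn g0 psm + Zn f0 psp + Zn g0 psp) in *.
  pose proof (RInt_cos_int_bnd (1 + k)) as C1. pose proof (RInt_cos_int_bnd (1 - k)) as C2.
  fold (C (1 + k)) in C1. fold (C (1 - k)) in C2.
  pose proof PI_RGT_0. pose proof PI_gt3.
  assert (Hre : Rabs (fourier_re (rhoE f0 g0 P) k l) <= W / 2).
  { rewrite re_formula. rewrite Rabs_mult, Rabs_inv, (Rabs_right ((2*PI)^2)) by nra.
    apply Rle_trans with (/ (2 * PI) ^ 2 * (2 * PI * W)).
    - apply Rmult_le_compat_l. apply Rlt_le, Rinv_0_lt_compat; nra.
      eapply Rle_trans. apply Rabs_triang. rewrite !Rabs_mult.
      assert (Rabs (C (1 + k)) * Rabs (RInt a1 (- PI) PI) <= 2 * PI * ((Zn f0 psm + Zn g0 psm) / 2))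
        by (apply Rmult_le_compat; auto using Rabs_pos).
      assert (Rabs (C (1 - k)) * Rabs (RInt a3 (- PI) PI) <= 2 * PI * ((Zn f0 psp + Zn g0 psp) / 2))
        by (apply Rmult_le_compat; auto using Rabs_pos).
      unfold W. nra.
    - replace (/ (2 * PI) ^ 2 * (2 * PI * W)) with (W / (2 * PI)) by (field; lra).
      unfold Rdiv. apply Rmult_le_compat_l; [unfold W; lra|]. apply Rinv_le_contravar; lra. }
  assert (Him : Rabs (fourier_im (rhoE f0 g0 P) k l) <= W / 2).
  { rewrite im_formula. rewrite Rabs_mult, Rabs_inv, (Rabs_right ((2*PI)^2)) by nra.
    apply Rle_trans with (/ (2 * PI) ^ 2 * (2 * PI * W)).
    - apply Rmult_le_compat_l. apply Rlt_le, Rinv_0_lt_compat; nra.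
      eapply Rle_trans. apply Rabs_triang. rewrite !Rabs_mult, Rabs_Ropp.
      assert (Rabs (C (1 + k)) * Rabs (RInt a2 (- PI) PI) <= 2 * PI * ((Zn f0 psm + Zn g0 psm) / 2))
        by (apply Rmult_le_compat; auto using Rabs_pos).
      assert (Rabs (C (1 - k)) * Rabs (RInt a4 (- PI) PI) <= 2 * PI * ((Zn f0 psp + Zn g0 psp) / 2))
        by (apply Rmult_le_compat; auto using Rabs_pos).
      unfold W. nra.
    - replace (/ (2 * PI) ^ 2 * (2 * PI * W)) with (W / (2 * PI)) by (field; lra).
      unfold Rdiv. apply Rmult_le_compat_l; [unfold W; lra|]. apply Rinv_le_contravar; lra. }
  unfold fourier_abs2.
  rewrite <- (Rabs_sq (fourier_re _ k l)), <- (Rabs_sq (fourier_im _ k l)).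
  assert (Rabs (fourier_re (rhoE f0 g0 P) k l) ^ 2 <= (W/2)^2) by (apply pow_incr; split; auto using Rabs_pos).
  assert (Rabs (fourier_im (rhoE f0 g0 P) k l) ^ 2 <= (W/2)^2) by (apply pow_incr; split; auto using Rabs_pos).
  assert (0 <= W) by (unfold W; lra). nra.
Qed.

End Four.

Definition Dl (e l : R) := atan (e * (l + 1/2)) - atan (e * (l - 1/2)).

Lemma Dl_lb e l : 0 < e -> e / (1 + e^2 * (Rabs l + 1/2)^2) <= Dl e l.
Proof.
  intros He. unfold Dl.
  destruct (MVT_gen atan (e * (l - 1/2)) (e * (l + 1/2)) (fun x => / (1 + x^2))) as [c [Hc Eq]].
  - intros x _. apply is_derive_Reals. apply derivable_pt_lim_atan.
  - intros x _. apply derivable_continuous_pt. exists (/ (1 + x^2)). apply derivable_pt_lim_atan.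
  - rewrite Eq. rewrite Rmin_left, Rmax_right in Hc by nra.
    assert (E : e * (l + 1 / 2) - e * (l - 1 / 2) = e) by field. rewrite E.
    assert (Hc2 : c^2 <= e^2 * (Rabs l + 1/2)^2).
    { rewrite <- Rpow_mult_distr. rewrite <- (Rabs_sq c). apply pow_incr. split. apply Rabs_pos.
      apply Rabs_le. destruct (Rcase_abs l) as [Hl|Hl]; [rewrite Rabs_left by lra | rewrite Rabs_right by lra]; nra. }
    apply Rle_trans with (e * / (1 + c^2)); [| right; ring].
    unfold Rdiv. apply Rmult_le_compat_l; [lra|].
    apply Rinv_le_contravar. nra. lra.
Qed.

Lemma term_bnd x A a g e l : 0 < e <= 1 -> 0 <= A -> 0 <= a -> 0 <= g -> 0 <= x ->
  x <= A^2 -> x <= (e * (a + g * Rabs l))^2 ->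
  x / (1 + l^2) <= 4 * (A^2 + 2 * (a^2 + g^2)) * e * Dl e l.
Proof.
  intros He HA Ha Hg Hx H1 H2.
  set (mu := A^2 + 2 * (a^2 + g^2)). assert (Hmu : 0 <= mu) by (unfold mu; nra).
  assert (Hl2 : 0 <= l^2) by nra.
  assert (HD := Dl_lb e l (proj1 He)).
  assert (Hq : (Rabs l + 1/2)^2 <= 2 * l^2 + 1/2).
  { rewrite <- (Rabs_sq l). pose proof (pow2_ge_0 (Rabs l - 1/2)). nra. }
  assert (He2 : e^2 <= 1) by nra.
  assert (Hq2 : e^2 * (Rabs l + 1/2)^2 <= e^2 * (2*l^2 + 1/2)) by (apply Rmult_le_compat_l; nra).
  assert (P1 : 0 <= e^2 * (Rabs l + 1/2)^2) by (apply Rmult_le_pos; apply pow2_ge_0).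
  assert (P2 : 0 <= e^2 * l^2) by (apply Rmult_le_pos; apply pow2_ge_0).
  assert (HD2 : e / (2 * (1 + e^2 * l^2)) <= Dl e l).
  { eapply Rle_trans; [|apply HD]. unfold Rdiv. apply Rmult_le_compat_l; [lra|].
    apply Rinv_le_contravar; lra. }
  assert (Hx2 : x <= mu * e^2 * (1 + l^2) / 2 * 2).
  { eapply Rle_trans. apply H2. unfold mu.
    assert ((a + g * Rabs l)^2 <= 2 * (a^2 + g^2) * (1 + l^2)).
    { rewrite <- (Rabs_sq l). pose proof (Rabs_pos l). nra. }
    assert (0 <= A^2 * e^2 * (1 + l^2)) by (apply Rmult_le_pos; nra).
    rewrite Rpow_mult_distr. nra. }
  assert (Hmain : x / (1 + l^2) <= mu * (2 * e^2 / (1 + e^2 * l^2))).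
  { destruct (Rle_dec (e^2 * l^2) 1).
    - apply (Rmult_le_reg_r (1 + l^2)); [nra|]. unfold Rdiv at 1. rewrite Rmult_assoc, Rinv_l, Rmult_1_r by nra.
      apply Rle_trans with (mu * e^2 * (1 + l^2)); [lra|].
      assert (e^2 <= 2 * e^2 / (1 + e^2 * l^2)).
      { apply (Rmult_le_reg_r (1 + e^2 * l^2)); [nra|]. unfold Rdiv. rewrite Rmult_assoc, Rinv_l by nra. nra. }
      assert (0 <= mu * (1 + l^2)) by nra. nra.
    - apply Rle_trans with (A^2 / (1 + l^2)).
      + unfold Rdiv. apply Rmult_le_compat_r; [apply Rlt_le, Rinv_0_lt_compat; nra| lra].
      + apply Rle_trans with (mu / (1 + l^2)).
        * unfold Rdiv. apply Rmult_le_compat_r; [apply Rlt_le, Rinv_0_lt_compat; nra| unfold mu; nra].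
        * unfold Rdiv. apply Rmult_le_compat_l; auto.
          apply Rle_trans with (2 * e^2 / (2 * e^2 * l^2)).
          -- apply Rle_trans with (/ l^2). apply Rinv_le_contravar; nra.
             right. field. split; nra.
          -- unfold Rdiv. apply Rmult_le_compat_l; [nra|]. apply Rinv_le_contravar; nra. }
  eapply Rle_trans. apply Hmain.
  replace (4 * mu * e * Dl e l) with (mu * (2 * e * (2 * Dl e l))) by ring.
  apply Rmult_le_compat_l; auto.
  replace (2 * e ^ 2 / (1 + e ^ 2 * l ^ 2)) with (2 * e * (2 * (e / (2 * (1 + e^2 * l^2))))) by (field; nra).
  apply Rmult_le_compat_l; [lra|]. lra.
Qed.

Lemma telescope (h : nat -> R) n : sum_f_R0 (fun j => h (S j) - h j) n = h (S n) - h 0%nat.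
Proof. induction n; simpl; [ring| rewrite IHn; ring]. Qed.

Lemma sum_ind p n : sum_f_R0 (fun i => if Nat.eqb i p then 1 else 0) n <= 1.
Proof.
  assert (forall n, sum_f_R0 (fun i => if Nat.eqb i p then 1 else 0) n = if Nat.leb p n then 1 else 0).
  { induction n0.
    - simpl. destruct p; simpl; auto.
    - rewrite tech5, IHn0. destruct (Nat.eqb_spec (S n0) p); destruct (Nat.leb_spec p n0); destruct (Nat.leb_spec p (S n0));
      try lia; ring. }
  rewrite H. destruct (Nat.leb p n); lra.
Qed.

Lemma abs2_pos f k l : 0 <= fourier_abs2 f k l.
Proof. unfold fourier_abs2. pose proof (pow2_ge_0 (fourier_re f k l)). pose proof (pow2_ge_0 (fourier_im f k l)). lra. Qed.

Lemma sum_scal_l (c : R) (f : nat -> R) n : sum_f_R0 (fun j => c * f j) n = c * sum_f_R0 f n.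
Proof. induction n; simpl; [ring| rewrite IHn; ring]. Qed.

Lemma Hm1_partial_bnd f A a g e : 0 < e <= 1 -> 0 <= A -> 0 <= a -> 0 <= g ->
  (forall k l, (k <> 1)%Z -> (k <> -1)%Z -> fourier_abs2 f k l = 0) ->
  (forall k l, fourier_abs2 f k l <= A^2) ->
  (forall k l, fourier_abs2 f k l <= (e * (a + g * Rabs (IZR l)))^2) ->
  forall M, Hm1_partial f M <= 8 * PI * (A^2 + 2 * (a^2 + g^2)) * e.
Proof.
  intros He HA Ha Hg H0 H1 H2 M.
  set (mu := A^2 + 2 * (a^2 + g^2)). assert (Hmu : 0 <= mu) by (unfold mu; nra).
  pose proof PI_RGT_0.
  set (B := 4 * mu * e * PI).
  assert (Hinner1 : forall k, (k = 1 \/ k = -1)%Z ->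
    sum_f_R0 (fun j => Hm1_term f k (Z.of_nat j - Z.of_nat M)%Z) (2 * M) <= B).
  { intros k Hk.
    set (h := fun j : nat => atan (e * (IZR (Z.of_nat j - Z.of_nat M) - 1/2))).
    apply Rle_trans with (sum_f_R0 (fun j => 4 * mu * e * (h (S j) - h j)) (2 * M)).
    - apply sum_Rle. intros j _.
      unfold Hm1_term. replace (Z.eqb k 0) with false by (symmetry; apply Z.eqb_neq; lia).
      simpl andb. cbv iota.
      replace (IZR k ^ 2 + IZR (Z.of_nat j - Z.of_nat M) ^ 2) with (1 + IZR (Z.of_nat j - Z.of_nat M) ^ 2)
        by (destruct Hk as [-> | ->]; simpl; ring).
      replace (h (S j) - h j) with (Dl e (IZR (Z.of_nat j - Z.of_nat M))).
      + apply (term_bnd _ A a g e); auto using abs2_pos.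
      + unfold h, Dl. rewrite Nat2Z.inj_succ.
        replace (Z.succ (Z.of_nat j) - Z.of_nat M)%Z with ((Z.of_nat j - Z.of_nat M) + 1)%Z by lia.
        rewrite plus_IZR. f_equal; f_equal; field.
    - rewrite sum_scal_l, telescope. unfold h.
      pose proof (atan_bound (e * (IZR (Z.of_nat (S (2 * M)) - Z.of_nat M) - 1 / 2))).
      pose proof (atan_bound (e * (IZR (Z.of_nat 0 - Z.of_nat M) - 1 / 2))).
      unfold B. assert (0 <= 4 * mu * e) by (repeat apply Rmult_le_pos; lra). 
      apply Rmult_le_compat_l; auto. lra. }
  assert (Hzero : forall k l, (k <> 1)%Z -> (k <> -1)%Z -> Hm1_term f k l = 0).
  { intros k l Hk1 Hk2. unfold Hm1_term. destruct (andb _ _); auto. rewrite H0 by auto. unfold Rdiv; ring. }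
  unfold Hm1_partial.
  apply Rle_trans with (sum_f_R0 (fun i => B * ((if Nat.eqb i (S M) then 1 else 0) + (if Nat.eqb i (M - 1) then 1 else 0))) (2 * M)).
  - apply sum_Rle. intros i _.
    assert (HB : 0 <= B) by (unfold B; apply Rmult_le_pos; [apply Rmult_le_pos; [apply Rmult_le_pos|]|]; lra).
    destruct (Z.eq_dec (Z.of_nat i - Z.of_nat M) 1) as [E1|E1].
    + replace (Nat.eqb i (S M)) with true by (symmetry; apply Nat.eqb_eq; lia).
      rewrite E1. eapply Rle_trans. apply Hinner1; auto.
      destruct (Nat.eqb i (M - 1)); lra.
    + destruct (Z.eq_dec (Z.of_nat i - Z.of_nat M) (-1)) as [E2|E2].
      * replace (Nat.eqb i (M - 1)) with true by (symmetry; apply Nat.eqb_eq; lia).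
        rewrite E2. eapply Rle_trans. apply Hinner1; auto.
        destruct (Nat.eqb i (S M)); lra.
      * rewrite (sum_eq _ (fun _ => 0)) by (intros; apply Hzero; auto).
        rewrite sum_cte. rewrite Rmult_0_l.
        apply Rmult_le_pos; auto. destruct (Nat.eqb i (S M)); destruct (Nat.eqb i (M - 1)); lra.
  - rewrite sum_scal_l, plus_sum. pose proof (sum_ind (S M) (2 * M)). pose proof (sum_ind (M - 1) (2 * M)).
    unfold B. assert (0 <= 4 * mu * e * PI) by (apply Rmult_le_pos; nra).
    apply Rle_trans with (4 * mu * e * PI * 2). apply Rmult_le_compat_l; auto; lra.
    lra.
Qed.

Lemma cont_opp f : cont f -> cont (fun x => - f x).
Proof. intros H. apply (cont_comp f (fun u => - u)); auto. apply cont_der; intros; auto_derive; auto. Qed.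

Lemma cont_pt f x : cont f -> continuity_pt f x.
Proof. intros H. apply continuity_pt_filterlim. apply H. Qed.

Lemma bound_on f : cont f -> exists M, 0 <= M /\ BndOn f M.
Proof.
  intros Hf. pose proof PI_RGT_0.
  destruct (continuity_ab_maj (fun x => Rabs (f x)) (-PI) PI) as [Mx [H1 H2]].
  - lra.
  - intros c _. apply (continuity_pt_comp f Rabs). apply cont_pt; auto. apply Rcontinuity_abs.
  - exists (Rabs (f Mx)). split. apply Rabs_pos. intros y Hy. apply H1; auto.
Qed.

Lemma smooth_facts f : smooth1 f -> (forall x, ex_derive f x) /\ cont f /\ cont (Derive f).
Proof.
  intros H. assert (H0 : forall x, ex_derive f x) by (intros x; exact (H 0%nat x)).
  split; auto. split. apply cont_der; auto.
  apply cont_der. intros x. exact (H 1%nat x).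
Qed.

Lemma Lip_from_der f K : (forall x, ex_derive f x) -> BndOn (Derive f) K -> LipOn f K.
Proof.
  intros Hd HK y z Hy Hz.
  destruct (MVT_gen f z y (Derive f)) as [c [Hc Eq]].
  - intros x _. apply Derive_correct. auto.
  - intros x _. apply cont_pt. apply cont_der; auto.
  - rewrite Eq, Rabs_mult. apply Rmult_le_compat_r. apply Rabs_pos.
    apply HK. split.
    + apply Rle_trans with (Rmin z y); [|lra]. apply Rmin_glb; lra.
    + apply Rle_trans with (Rmax z y); [lra|]. apply Rmax_lub; lra.
Qed.

Fixpoint dpsum (j : nat) (y : R) : R :=
  match j with O => 0 | S i => dpsum i y + PI * (INR (Nseq i) * sin (INR (Nseq i) * y) / 2) end.
Definition dPhi (n : nat) (tau y : R) := dpsum n y + tau * (INR (Nseq n) * sin (INR (Nseq n) * y) / 2).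

Lemma dpsum_der j y : is_derive (psum j) y (dpsum j y).
Proof.
  induction j; simpl.
  - change (is_derive (fun _ : R => 0) y 0). auto_derive; auto.
  - apply (is_derive_plus (psum j) (fun y => PI * bdig j y)); auto.
    unfold bdig. auto_derive; auto. field.
Qed.

Lemma dPhi_der n tau y : is_derive (Phi n tau) y (dPhi n tau y).
Proof.
  unfold Phi, dPhi. apply (is_derive_plus (psum n) (fun y => tau * bdig n y)). apply dpsum_der.
  unfold bdig. auto_derive; auto. field.
Qed.

Lemma cont_dPhi n tau : cont (dPhi n tau).
Proof.
  unfold dPhi. apply cont_plus.
  - induction n; simpl. apply cont_const. apply cont_plus; auto. apply cont_der; intros; auto_derive; auto.
  - apply cont_der; intros; auto_derive; auto.
Qed.

Lemma cont_Phi n tau : cont (Phi n tau).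
Proof. apply cont_der. intros; eexists; apply dPhi_der. Qed.

Lemma dpsum_bnd j y : Rabs (dpsum j y) <= PI / 2 * INR (Ssum j).
Proof.
  induction j; simpl.
  - rewrite Rabs_R0; lra.
  - rewrite plus_INR. eapply Rle_trans. apply Rabs_triang.
    rewrite Rabs_mult, (Rabs_right PI) by (pose proof PI_RGT_0; lra).
    assert (Rabs (INR (Nseq j) * sin (INR (Nseq j) * y) / 2) <= INR (Nseq j) / 2).
    { unfold Rdiv. rewrite !Rabs_mult, Rabs_inv, (Rabs_right 2), (Rabs_right (INR (Nseq j))) by (try apply Rle_ge, pos_INR; lra).
      assert (Rabs (sin (INR (Nseq j) * y)) <= 1) by (apply Rabs_le, SIN_bound).
      pose proof (pos_INR (Nseq j)). pose proof (Rabs_pos (sin (INR (Nseq j) * y))). nra. }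
    pose proof PI_RGT_0. nra.
Qed.

Lemma dPhi_bnd n tau y : 0 <= tau <= PI -> Rabs (dPhi n tau y) <= PI * INR (Nseq n).
Proof.
  intros Ht. unfold dPhi. eapply Rle_trans. apply Rabs_triang.
  pose proof (dpsum_bnd n y). pose proof (Nseq_big n). pose proof (pos_INR (Ssum n)).
  assert (1 <= 16 ^ n) by (apply pow_R1_Rle; lra).
  assert (INR (Ssum n) <= INR (Nseq n)) by nra.
  assert (Rabs (tau * (INR (Nseq n) * sin (INR (Nseq n) * y) / 2)) <= PI * (INR (Nseq n) / 2)).
  { unfold Rdiv. rewrite !Rabs_mult, Rabs_inv, (Rabs_right 2), (Rabs_right (INR (Nseq n))), (Rabs_right tau) by (try apply Rle_ge, pos_INR; lra).
    assert (Rabs (sin (INR (Nseq n) * y)) <= 1) by (apply Rabs_le, SIN_bound).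
    pose proof (pos_INR (Nseq n)). pose proof (Rabs_pos (sin (INR (Nseq n) * y))).
    apply Rmult_le_compat; try lra. nra. nra. }
  pose proof PI_RGT_0. nra.
Qed.

Lemma abs4a a b c d : Rabs (a - b + c + d) <= Rabs a + Rabs b + Rabs c + Rabs d.
Proof.
  pose proof (Rabs_triang (a - b + c) d). pose proof (Rabs_triang (a - b) c).
  pose proof (Rabs_triang a (- b)). rewrite Rabs_Ropp in H1. unfold Rminus in *. lra.
Qed.
Lemma abs4b a b c d : Rabs (a - b - c - d) <= Rabs a + Rabs b + Rabs c + Rabs d.
Proof.
  pose proof (Rabs_triang (a - b - c) (-d)). pose proof (Rabs_triang (a - b) (-c)).
  pose proof (Rabs_triang a (- b)). rewrite Rabs_Ropp in H, H0, H1. unfold Rminus in *. lra.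
Qed.

Section H1rho.
Variables (f0 g0 P dP : R -> R) (Mf Mg Kf Kg Lam : R).
Hypotheses (Hfd : forall y, ex_derive f0 y) (Hgd : forall y, ex_derive g0 y)
  (Hf' : cont (Derive f0)) (Hg' : cont (Derive g0))
  (HP : forall y, is_derive P y (dP y)) (HdP : cont dP)
  (BMf : BndOn f0 Mf) (BMg : BndOn g0 Mg) (BKf : BndOn (Derive f0) Kf) (BKg : BndOn (Derive g0) Kg)
  (BL : BndOn dP Lam) (HMf : 0 <= Mf) (HMg : 0 <= Mg) (HKf : 0 <= Kf) (HKg : 0 <= Kg) (HL : 0 <= Lam).

Let Pp y := f0 y * cos (P y) + g0 y * sin (P y).
Let Qq y := g0 y * cos (P y) - f0 y * sin (P y).
Let Pp' y := Derive f0 y * cos (P y) - f0 y * sin (P y) * dP y + Derive g0 y * sin (P y) + g0 y * cos (P y) * dP y.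
Let Qq' y := Derive g0 y * cos (P y) - g0 y * sin (P y) * dP y - Derive f0 y * sin (P y) - f0 y * cos (P y) * dP y.

Lemma cf : cont f0. Proof. apply cont_der; auto. Qed.
Lemma cg : cont g0. Proof. apply cont_der; auto. Qed.
Lemma cP : cont P. Proof. apply cont_der; intros; eexists; apply HP. Qed.
Lemma ccosP : cont (fun y => cos (P y)). Proof. apply (cont_comp P cos); auto using cP, cont_cos. Qed.
Lemma csinP : cont (fun y => sin (P y)). Proof. apply (cont_comp P sin); auto using cP, cont_sin. Qed.

Lemma cPp : cont Pp. Proof. unfold Pp. apply cont_plus; apply cont_mult; auto using cf, cg, ccosP, csinP. Qed.
Lemma cQq : cont Qq. Proof. unfold Qq. apply cont_minus; apply cont_mult; auto using cf, cg, ccosP, csinP. Qed.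
Lemma cPp' : cont Pp'.
Proof. unfold Pp'. repeat first [apply cont_plus | apply cont_minus | apply cont_mult | apply cont_opp]; auto using cf, cg, ccosP, csinP. Qed.
Lemma cQq' : cont Qq'.
Proof. unfold Qq'. repeat first [apply cont_plus | apply cont_minus | apply cont_mult | apply cont_opp]; auto using cf, cg, ccosP, csinP. Qed.

Lemma rho_sep x y : rhoE f0 g0 P x y = sin x * Pp y + cos x * Qq y.
Proof. unfold rhoE, Pp, Qq. rewrite sin_minus, cos_minus. ring. Qed.

Lemma Dx x y : Derive (fun x' => rhoE f0 g0 P x' y) x = cos x * Pp y - sin x * Qq y.
Proof.
  apply is_derive_unique. unfold rhoE. auto_derive; auto.
  unfold Pp, Qq. repeat rewrite ?sin_plus, ?cos_plus, ?sin_neg, ?cos_neg, ?sin_minus, ?cos_minus. ring.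
Qed.

Lemma Dy x y : Derive (fun y' => rhoE f0 g0 P x y') y = sin x * Pp' y + cos x * Qq' y.
Proof.
  apply is_derive_unique. unfold rhoE. auto_derive.
  - repeat split; auto; eexists; apply HP.
  - replace (Derive (fun x => P x) y) with (dP y) by (symmetry; apply is_derive_unique; apply HP).
    change (Derive (fun x => f0 x) y) with (Derive f0 y). change (Derive (fun x => g0 x) y) with (Derive g0 y).
    unfold Pp', Qq'. repeat rewrite ?sin_plus, ?cos_plus, ?sin_neg, ?cos_neg, ?sin_minus, ?cos_minus. ring.
Qed.

Lemma bnd_Pp y : -PI <= y <= PI -> Rabs (Pp y) <= Mf + Mg /\ Rabs (Qq y) <= Mf + Mg.
Proof.
  intros Hy. specialize (BMf y Hy). specialize (BMg y Hy).
  assert (Rabs (cos (P y)) <= 1) by (apply Rabs_le, COS_bound).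
  assert (Rabs (sin (P y)) <= 1) by (apply Rabs_le, SIN_bound).
  pose proof (Rabs_pos (f0 y)). pose proof (Rabs_pos (g0 y)). pose proof (Rabs_pos (cos (P y))). pose proof (Rabs_pos (sin (P y))).
  unfold Pp, Qq. split.
  - eapply Rle_trans. apply Rabs_triang. rewrite !Rabs_mult. nra.
  - eapply Rle_trans. apply Rabs_triang. rewrite Rabs_Ropp, !Rabs_mult. nra.
Qed.

Let Pi := Kf + Kg + (Mf + Mg) * Lam.

Lemma bnd_Pp' y : -PI <= y <= PI -> Rabs (Pp' y) <= Pi /\ Rabs (Qq' y) <= Pi.
Proof.
  intros Hy. specialize (BMf y Hy). specialize (BMg y Hy). specialize (BKf y Hy). specialize (BKg y Hy). specialize (BL y Hy).
  assert (Rabs (cos (P y)) <= 1) by (apply Rabs_le, COS_bound).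
  assert (Rabs (sin (P y)) <= 1) by (apply Rabs_le, SIN_bound).
  pose proof (Rabs_pos (f0 y)). pose proof (Rabs_pos (g0 y)). pose proof (Rabs_pos (cos (P y))). pose proof (Rabs_pos (sin (P y))).
  pose proof (Rabs_pos (Derive f0 y)). pose proof (Rabs_pos (Derive g0 y)). pose proof (Rabs_pos (dP y)).
  assert (Rabs (f0 y) * Rabs (sin (P y)) * Rabs (dP y) <= Mf * Lam).
  { apply Rmult_le_compat; try nra; try (apply Rmult_le_pos; auto). }
  assert (Rabs (f0 y) * Rabs (cos (P y)) * Rabs (dP y) <= Mf * Lam).
  { apply Rmult_le_compat; try nra; try (apply Rmult_le_pos; auto). }
  assert (Rabs (g0 y) * Rabs (sin (P y)) * Rabs (dP y) <= Mg * Lam).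
  { apply Rmult_le_compat; try nra; try (apply Rmult_le_pos; auto). }
  assert (Rabs (g0 y) * Rabs (cos (P y)) * Rabs (dP y) <= Mg * Lam).
  { apply Rmult_le_compat; try nra; try (apply Rmult_le_pos; auto). }
  assert (Rabs (Derive f0 y) * Rabs (cos (P y)) <= Kf) by nra.
  assert (Rabs (Derive f0 y) * Rabs (sin (P y)) <= Kf) by nra.
  assert (Rabs (Derive g0 y) * Rabs (cos (P y)) <= Kg) by nra.
  assert (Rabs (Derive g0 y) * Rabs (sin (P y)) <= Kg) by nra.
  unfold Pp', Qq', Pi. split.
  - eapply Rle_trans. apply abs4a. rewrite !Rabs_mult. lra.
  - eapply Rle_trans. apply abs4b. rewrite !Rabs_mult. lra.
Qed.

Lemma sq_le z m : Rabs z <= m -> z ^ 2 <= m ^ 2.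
Proof. intros H. rewrite <- Rabs_sq. apply pow_incr. split; auto using Rabs_pos. Qed.

Lemma absI c B : cont c -> (forall y, -PI <= y <= PI -> Rabs (c y) <= B) -> Rabs (RInt c (-PI) PI) <= 2 * PI * B.
Proof.
  intros Hc HB. pose proof PI_RGT_0.
  replace (2 * PI * B) with ((PI - - PI) * B) by ring.
  apply abs_RInt_le_const; auto. lra. apply cont_ex; auto.
Qed.

Lemma H1_rhoE : H1_norm_T2 (rhoE f0 g0 P) <= 2 * PI * (2 * (Mf + Mg) + 2 * Pi).
Proof.
  unfold H1_norm_T2.
  rewrite (RInt_ext _ (fun x => RInt (fun y =>
      (sin x ^ 2) * (Pp y ^ 2 + Qq y ^ 2 + Pp' y ^ 2) + (cos x ^ 2) * (Pp y ^ 2 + Qq y ^ 2 + Qq' y ^ 2)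
      + (2 * sin x * cos x) * (Pp' y * Qq' y) + (fun _ => 0) x * (fun _ => 0) y) (-PI) PI)).
  2:{ intros x _. apply RInt_ext. intros y _. rewrite rho_sep, Dx, Dy. simpl; ring. }
  assert (HPpQq : cont (fun y => Pp y ^ 2 + Qq y ^ 2)).
  { apply cont_plus; apply (cont_comp _ (fun u => u ^ 2)); auto using cPp, cQq; apply cont_der; intros; auto_derive; auto. }
  assert (Hsq : forall h, cont h -> cont (fun y => h y ^ 2)).
  { intros h Hh. apply (cont_comp _ (fun u => u ^ 2)); auto; apply cont_der; intros; auto_derive; auto. }
  rewrite (dbl_sep (fun x => sin x ^ 2) (fun x => cos x ^ 2) (fun x => 2 * sin x * cos x) (fun _ => 0)
     (fun y => Pp y ^ 2 + Qq y ^ 2 + Pp' y ^ 2) (fun y => Pp y ^ 2 + Qq y ^ 2 + Qq' y ^ 2) (fun y => Pp' y * Qq' y) (fun _ => 0)).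
  2-4: apply cont_der; intros; auto_derive; auto.
  2: apply cont_const.
  2-3: apply cont_plus; auto; apply Hsq; auto using cPp', cQq'.
  2: apply cont_mult; auto using cPp', cQq'.
  2: apply cont_const.
  set (m := Mf + Mg). set (p := Pi).
  assert (Hm : 0 <= m) by (unfold m; lra). assert (Hp : 0 <= p) by (unfold p, Pi; nra).
  pose proof PI_RGT_0.
  assert (I1 : Rabs (RInt (fun x => sin x ^ 2) (-PI) PI) <= 2 * PI * 1).
  { apply absI. apply cont_der; intros; auto_derive; auto. intros. pose proof (SIN_bound y).
    rewrite Rabs_right by nra. nra. }
  assert (I2 : Rabs (RInt (fun x => cos x ^ 2) (-PI) PI) <= 2 * PI * 1).
  { apply absI. apply cont_der; intros; auto_derive; auto. intros. pose proof (COS_bound y).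
    rewrite Rabs_right by nra. nra. }
  assert (I3 : Rabs (RInt (fun x => 2 * sin x * cos x) (-PI) PI) <= 2 * PI * 1).
  { apply absI. apply cont_der; intros; auto_derive; auto. intros. pose proof (sin2_cos2 y) as S2. unfold Rsqr in S2.
    pose proof (pow2_ge_0 (sin y - cos y)). pose proof (pow2_ge_0 (sin y + cos y)).
    apply Rabs_le. split; nra. }
  assert (J1 : Rabs (RInt (fun y => Pp y ^ 2 + Qq y ^ 2 + Pp' y ^ 2) (-PI) PI) <= 2 * PI * (2 * m^2 + p^2)).
  { apply absI. apply cont_plus; auto; apply Hsq; auto using cPp'. intros y Hy.
    destruct (bnd_Pp y Hy) as [B1 B2]. destruct (bnd_Pp' y Hy) as [B3 B4].
    apply sq_le in B1. apply sq_le in B2. apply sq_le in B3.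
    rewrite Rabs_right. fold m p in B1, B2, B3. lra. pose proof (pow2_ge_0 (Pp y)). pose proof (pow2_ge_0 (Qq y)). pose proof (pow2_ge_0 (Pp' y)). lra. }
  assert (J2 : Rabs (RInt (fun y => Pp y ^ 2 + Qq y ^ 2 + Qq' y ^ 2) (-PI) PI) <= 2 * PI * (2 * m^2 + p^2)).
  { apply absI. apply cont_plus; auto; apply Hsq; auto using cQq'. intros y Hy.
    destruct (bnd_Pp y Hy) as [B1 B2]. destruct (bnd_Pp' y Hy) as [B3 B4].
    apply sq_le in B1. apply sq_le in B2. apply sq_le in B4.
    rewrite Rabs_right. fold m p in B1, B2, B4. lra. pose proof (pow2_ge_0 (Pp y)). pose proof (pow2_ge_0 (Qq y)). pose proof (pow2_ge_0 (Qq' y)). lra. }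
  assert (J3 : Rabs (RInt (fun y => Pp' y * Qq' y) (-PI) PI) <= 2 * PI * (p^2)).
  { apply absI. apply cont_mult; auto using cPp', cQq'. intros y Hy.
    destruct (bnd_Pp' y Hy) as [B3 B4]. fold p in B3, B4. rewrite Rabs_mult.
    pose proof (Rabs_pos (Pp' y)). pose proof (Rabs_pos (Qq' y)). simpl. nra. }
  rewrite RInt_const'. rewrite Rmult_0_r, Rmult_0_l, Rplus_0_r.
  set (X1 := RInt (fun x => sin x ^ 2) (-PI) PI) in *.
  set (X2 := RInt (fun x => cos x ^ 2) (-PI) PI) in *.
  set (X3 := RInt (fun x => 2 * sin x * cos x) (-PI) PI) in *.
  set (Y1 := RInt (fun y => Pp y ^ 2 + Qq y ^ 2 + Pp' y ^ 2) (-PI) PI) in *.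
  set (Y2 := RInt (fun y => Pp y ^ 2 + Qq y ^ 2 + Qq' y ^ 2) (-PI) PI) in *.
  set (Y3 := RInt (fun y => Pp' y * Qq' y) (-PI) PI) in *.
  assert (V : X1 * Y1 + X2 * Y2 + X3 * Y3 <= (2 * PI * (2 * m + 2 * p)) ^ 2).
  { assert (X1 * Y1 <= (2*PI*1) * (2 * PI * (2 * m^2 + p^2))).
    { eapply Rle_trans. apply Rle_abs. rewrite Rabs_mult. apply Rmult_le_compat; auto using Rabs_pos. }
    assert (X2 * Y2 <= (2*PI*1) * (2 * PI * (2 * m^2 + p^2))).
    { eapply Rle_trans. apply Rle_abs. rewrite Rabs_mult. apply Rmult_le_compat; auto using Rabs_pos. }
    assert (X3 * Y3 <= (2*PI*1) * (2 * PI * (p^2))).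
    { eapply Rle_trans. apply Rle_abs. rewrite Rabs_mult. apply Rmult_le_compat; auto using Rabs_pos. }
    assert (4 * m^2 + 3 * p^2 <= (2 * m + 2 * p)^2) by nra.
    assert (0 <= PI^2) by nra.
    replace ((2 * PI * (2 * m + 2 * p)) ^ 2) with (4 * PI^2 * (2 * m + 2 * p)^2) by ring.
    nra. }
  apply Rle_trans with (sqrt ((2 * PI * (2 * m + 2 * p)) ^ 2)).
  - apply sqrt_le_1_alt. exact V.
  - rewrite sqrt_pow2. lra. nra.
Qed.
End H1rho.

Lemma Zn_all a Ka Ma n tau c : cont a -> 0 <= Ka -> 0 <= Ma -> LipOn a Ka -> BndOn a Ma -> 0 <= tau <= PI ->
  Zn a (fun y => Phi n tau y + c * y) <= 4 * PI * Ma /\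
  Zn a (fun y => Phi n tau y + c * y) <=
    (7/8)^n * ((4 * PI * Ma + 288 * PI^2 * (Ka + 2 * Ma)) + 288 * PI^2 * Ma * Rabs c).
Proof.
  intros Ha HK HM La Ba Ht. split.
  - apply Zn_triv; auto. apply cont_plus. apply cont_Phi. apply cont_mult; auto using cont_const, cont_id.
  - eapply Rle_trans. apply (mix_all a Ka Ma c n tau); auto. right. ring.
Qed.

Lemma Hm1_rho f0 g0 Kf Mf Kg Mg n tau :
  cont f0 -> cont g0 -> 0 <= Kf -> 0 <= Mf -> 0 <= Kg -> 0 <= Mg ->
  LipOn f0 Kf -> BndOn f0 Mf -> LipOn g0 Kg -> BndOn g0 Mg -> 0 <= tau <= PI ->
  let A := 8 * PI * (Mf + Mg) in
  let al := 2 * ((4 * PI * Mf + 288 * PI^2 * (Kf + 2 * Mf)) + (4 * PI * Mg + 288 * PI^2 * (Kg + 2 * Mg))) in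
  let ga := 2 * (288 * PI^2 * Mf + 288 * PI^2 * Mg) in
  Rbar_le (Hm1_norm (rhoE f0 g0 (Phi n tau))) (Finite (sqrt (8 * PI * (A^2 + 2 * (al^2 + ga^2)) * (7/8)^n))).
Proof.
  intros Hf Hg HKf HMf HKg HMg Lf Bf Lg Bg Ht A al ga.
  pose proof PI_RGT_0.
  assert (HP : cont (Phi n tau)) by apply cont_Phi.
  assert (He : 0 < (7/8)^n <= 1) by (split; [apply pow_lt; lra| rewrite <- (pow1 n); apply pow_incr; lra]).
  assert (HA : 0 <= A) by (unfold A; nra).
  assert (Hal : 0 <= al) by (unfold al; nra).
  assert (Hga : 0 <= ga) by (unfold ga; nra).
  assert (Hpart : forall M, Hm1_partial (rhoE f0 g0 (Phi n tau)) M <= 8 * PI * (A^2 + 2 * (al^2 + ga^2)) * (7/8)^n).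
  { apply Hm1_partial_bnd; auto.
    - intros k l Hk1 Hk2. apply four_zero; auto.
    - intros k l. eapply Rle_trans. apply four_bnd; auto.
      destruct (Zn_all f0 Kf Mf n tau (- IZR l) Hf HKf HMf Lf Bf Ht) as [A1 _].
      destruct (Zn_all g0 Kg Mg n tau (- IZR l) Hg HKg HMg Lg Bg Ht) as [A2 _].
      destruct (Zn_all f0 Kf Mf n tau (- - IZR l) Hf HKf HMf Lf Bf Ht) as [A3 _].
      destruct (Zn_all g0 Kg Mg n tau (- - IZR l) Hg HKg HMg Lg Bg Ht) as [A4 _].
      apply pow_incr. split.
      + pose proof (Zn_pos f0 (fun y => Phi n tau y + - IZR l * y)).
        pose proof (Zn_pos g0 (fun y => Phi n tau y + - IZR l * y)).
        pose proof (Zn_pos f0 (fun y => Phi n tau y + - - IZR l * y)).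
        pose proof (Zn_pos g0 (fun y => Phi n tau y + - - IZR l * y)). lra.
      + unfold A. lra.
    - intros k l. eapply Rle_trans. apply four_bnd; auto.
      destruct (Zn_all f0 Kf Mf n tau (- IZR l) Hf HKf HMf Lf Bf Ht) as [_ A1].
      destruct (Zn_all g0 Kg Mg n tau (- IZR l) Hg HKg HMg Lg Bg Ht) as [_ A2].
      destruct (Zn_all f0 Kf Mf n tau (- - IZR l) Hf HKf HMf Lf Bf Ht) as [_ A3].
      destruct (Zn_all g0 Kg Mg n tau (- - IZR l) Hg HKg HMg Lg Bg Ht) as [_ A4].
      rewrite Rabs_Ropp in A1, A2, A3, A4. rewrite Rabs_Ropp in A3, A4.
      apply pow_incr. split.
      + pose proof (Zn_pos f0 (fun y => Phi n tau y + - IZR l * y)).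
        pose proof (Zn_pos g0 (fun y => Phi n tau y + - IZR l * y)).
        pose proof (Zn_pos f0 (fun y => Phi n tau y + - - IZR l * y)).
        pose proof (Zn_pos g0 (fun y => Phi n tau y + - - IZR l * y)). lra.
      + unfold al, ga. lra. }
  unfold Hm1_norm.
  assert (HL : Rbar_le (Lim_seq (Hm1_partial (rhoE f0 g0 (Phi n tau)))) (Finite (8 * PI * (A^2 + 2 * (al^2 + ga^2)) * (7/8)^n))).
  { rewrite <- (Lim_seq_const (8 * PI * (A^2 + 2 * (al^2 + ga^2)) * (7/8)^n)).
    apply Lim_seq_le_loc. exists 0%nat. intros; apply Hpart. }
  destruct (Lim_seq (Hm1_partial (rhoE f0 g0 (Phi n tau)))) as [r| |]; simpl in HL |- *; auto.
  apply sqrt_le_1_alt. auto.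
Qed.

Lemma decay B t (n : nat) : 0 <= B -> 0 <= t -> t < (INR n + 1) * PI ->
  sqrt (B * (7/8)^n) <= sqrt (B * (8/7)) * exp (- (ln (8/7) / (2 * PI)) * t).
Proof.
  intros HB Ht Hn. pose proof PI_RGT_0.
  set (L := ln (8/7)). assert (HL : 0 < L) by (unfold L; rewrite <- ln_1; apply ln_increasing; lra).
  assert (E1 : (7/8)^n = exp (- (INR n * L))).
  { rewrite <- Rpower_pow by lra. unfold Rpower. f_equal.
    replace (7/8) with (/ (8/7)) by field. rewrite ln_Rinv by lra. fold L. ring. }
  assert (E2 : (7/8)^n <= 8/7 * (exp (- (L / (2 * PI)) * t))^2).
  { rewrite E1. rewrite <- exp_ln with (x := 8/7) at 1 by lra. fold L.
    replace ((exp (- (L / (2 * PI)) * t))^2) with (exp (- (L / PI) * t)).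
    2:{ simpl. rewrite Rmult_1_r, <- exp_plus. f_equal. field. lra. }
    rewrite <- exp_plus. apply exp_le'.
    assert (t / PI - 1 < INR n).
    { apply (Rmult_lt_reg_r PI); auto. unfold Rdiv. rewrite Rmult_minus_distr_r, Rmult_assoc, Rinv_l by lra. lra. }
    replace (- (L / PI) * t) with (- (t / PI) * L) by (field; lra). nra. }
  apply Rle_trans with (sqrt (B * (8/7) * (exp (- (L / (2 * PI)) * t))^2)).
  - apply sqrt_le_1_alt. rewrite Rmult_assoc. apply Rmult_le_compat_l; auto.
  - rewrite sqrt_mult by (try apply pow2_ge_0; nra). rewrite sqrt_pow2 by (apply Rlt_le, exp_pos). lra.
Qed.

Theorem theorem3p1 (f0 g0 : R -> R) :
  smooth1 f0 -> smooth1 g0 -> periodic2pi f0 -> periodic2pi g0 ->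
  exists (C0 C1 C2 beta1 beta2 beta3 : R) (U : R -> R -> R),
    0 < C0 /\ 0 < C1 /\ 0 < C2 /\ 0 < beta1 /\ 0 < beta2 /\ 0 < beta3 /\
    (forall t, smooth1 (U t) /\ periodic2pi (U t)) /\
    (forall y a b, ex_RInt (fun s => U s y) a b) /\
    (forall t y, Rabs (U t y) <= 1) /\
    (forall t, 0 <= t ->
       H1_norm_T (U t) <= C0 * exp (beta1 * IZR (ceil t) ^ 2)) /\
    (forall rho : R -> R -> R -> R,
       transport_solution U (fun x y => f0 y * sin x + g0 y * cos x) rho ->
       forall t, 0 <= t ->
         Rbar_le (Hm1_norm (rho t)) (Finite (C1 * exp (- beta2 * t))) /\
         H1_norm_T2 (rho t) <= C2 * exp (beta3 * IZR (ceil t) ^ 2)).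
Proof.
  intros Sf Sg _ _.
  destruct (smooth_facts f0 Sf) as [Dfx [Cf Cf']].
  destruct (smooth_facts g0 Sg) as [Dgx [Cg Cg']].
  destruct (bound_on f0 Cf) as [Mf [HMf Bf]].
  destruct (bound_on g0 Cg) as [Mg [HMg Bg]].
  destruct (bound_on (Derive f0) Cf') as [Kf [HKf BKf]].
  destruct (bound_on (Derive g0) Cg') as [Kg [HKg BKg]].
  assert (Lf : LipOn f0 Kf) by (apply Lip_from_der; auto).
  assert (Lg : LipOn g0 Kg) by (apply Lip_from_der; auto).
  pose proof PI_RGT_0.
  set (A := 8 * PI * (Mf + Mg)).
  set (al := 2 * ((4 * PI * Mf + 288 * PI^2 * (Kf + 2 * Mf)) + (4 * PI * Mg + 288 * PI^2 * (Kg + 2 * Mg)))).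
  set (ga := 2 * (288 * PI^2 * Mf + 288 * PI^2 * Mg)).
  set (B := 8 * PI * (A^2 + 2 * (al^2 + ga^2))).
  assert (HB : 0 <= B) by (unfold B; assert (0 <= A^2 + 2 * (al^2 + ga^2)) by nra; nra).
  assert (HL64 : 0 < ln 64) by (rewrite <- ln_1; apply ln_increasing; lra).
  assert (HL87 : 0 < ln (8/7)) by (rewrite <- ln_1; apply ln_increasing; lra).
  exists 6, (sqrt (B * (8/7)) + 1), (4 * PI * (Mf + Mg + Kf + Kg) + 4 * PI^2 * (Mf + Mg) + 1),
    (ln 64), (ln (8/7) / (2 * PI)), (ln 64), Uf.
  assert (0 <= sqrt (B * (8/7))) by apply sqrt_pos.
  split; [lra|]. split; [lra|].
  split; [assert (0 <= PI^2 * (Mf + Mg)) by nra; nra|]. split; [lra|].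
  split; [apply Rdiv_lt_0_compat; lra|]. split; [lra|].
  split; [intros; split; [apply smooth_U|apply per_U]|].
  split; [intros; apply ex_RInt_U|]. split; [intros; apply U_bnd|].
  split; [intros; apply H1_U; auto|].
  intros rho Hrho t Ht.
    pose proof (nidx_spec t Ht) as Hs. set (n := nidx t) in *. set (tau := t - INR n * PI).
    assert (Htau : 0 <= tau <= PI) by (unfold tau; lra).
    assert (Erho : rho t = rhoE f0 g0 (Phi n tau)).
    { apply functional_extensionality; intros x. apply functional_extensionality; intros y.
      specialize (Hrho t (x - RInt (fun s => Uf s y) 0 t) y Ht). 
      replace (x - RInt (fun s => Uf s y) 0 t + RInt (fun s => Uf s y) 0 t) with x in Hrho by ring.
      rewrite Hrho. rewrite RInt_U by auto. unfold rhoE. fold n tau. auto. }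
    rewrite Erho. split.
    { eapply Rbar_le_trans. apply (Hm1_rho f0 g0 Kf Mf Kg Mg n tau); auto.
    simpl. fold A al ga B. eapply Rle_trans. apply (decay B t n); auto. lra.
    assert (0 < exp (- (ln (8 / 7) / (2 * PI)) * t)) by apply exp_pos. nra. }
    set (Lam := PI * INR (Nseq n)).
    eapply Rle_trans.
    apply (H1_rhoE f0 g0 (Phi n tau) (dPhi n tau) Mf Mg Kf Kg Lam); auto.
    + intros; apply dPhi_der.
    + apply cont_dPhi.
    + intros y _. apply dPhi_bnd; auto.
    + unfold Lam. pose proof (pos_INR (Nseq n)). nra.
    + pose proof (Nidx_exp t Ht) as HE. fold n in HE.
      set (Ex := exp (ln 64 * IZR (ceil t) ^ 2)) in *.
      assert (1 <= Ex).
      { unfold Ex. rewrite <- exp_0. apply exp_le'. pose proof (pow2_ge_0 (IZR (ceil t))). nra. }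
      unfold Lam.
      assert (0 <= PI * (Mf + Mg) * INR (Nseq n)) by (pose proof (pos_INR (Nseq n)); apply Rmult_le_pos; [apply Rmult_le_pos|]; lra).
      assert (PI * (Mf + Mg) * INR (Nseq n) <= PI * (Mf + Mg) * Ex) by (apply Rmult_le_compat_l; nra).
      assert (0 <= Mf + Mg + Kf + Kg) by lra.
      set (S := Mf + Mg + Kf + Kg) in *.
      replace (2 * PI * (2 * (Mf + Mg) + 2 * (Kf + Kg + (Mf + Mg) * (PI * INR (Nseq n)))))
        with (4 * PI * S + 4 * PI * (PI * (Mf + Mg) * INR (Nseq n))) by (unfold S; ring).
      replace ((4 * PI * S + 4 * PI ^ 2 * (Mf + Mg) + 1) * Ex)
        with (4 * PI * S * Ex + 4 * PI * (PI * (Mf + Mg) * Ex) + Ex) by ring.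
      assert (4 * PI * S <= 4 * PI * S * Ex).
      { rewrite <- (Rmult_1_r (4 * PI * S)) at 1. apply Rmult_le_compat_l; auto. apply Rmult_le_pos; lra. }
      assert (4 * PI * (PI * (Mf + Mg) * INR (Nseq n)) <= 4 * PI * (PI * (Mf + Mg) * Ex)).
      { apply Rmult_le_compat_l; lra. }
      lra.
Qed.
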